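(* Consider any concurrent run of the Block-STM algorithm (described in the context) on a block of $n$ transactions $tx_0,\dots,tx_{n-1}$. At any time $T$ at which all transactions $tx_0,\dots,tx_{n-1}$ are globally committed, the following hold. (i) The set of memory locations $p$ such that the multi-version map $\mathit{data}$ contains some entry $(p,j)$ is exactly the set of locations written in the sequential run of $tx_0,\dots,tx_{n-1}$. (ii) For every such location $p$, $\mathtt{read}(p, n)$ returns status $\mathtt{OK}$ with a value equal to the content of $p$ at the end of the sequential run.
   Context: Model: threads perform atomic operations that appear to take place in a single global order; a ''time'' is a point in this order. Locks protect per-transaction status and dependency sets. Problem. A block is a sequence of transactions $tx_0,\dots,tx_{n-1}$ ($n=\mathtt{BLOCK.size()}$). Each transaction is a deterministic program that reads and writes memory locations. The sequential run executes $tx_0$ to completion on the initial storage, applies its writes, then $tx_1$, and so on. Shared state. MVMemory: a map $\mathit{data}$ from pairs $(\text{location}, \text{txn index})$ to either a pair (incarnation number, value) or a special marker ESTIMATE; arrays $\mathit{last\_written\_locations}[j]$ (set of locations) and $\mathit{last\_read\_set}[j]$ (set of (location, version) pairs), each loaded/stored atomically. A version is a pair $(j,i)$ (transaction index, incarnation number). Scheduler: atomic counters $\mathit{execution\_idx}=0$, $\mathit{validation\_idx}=0$, $\mathit{decrease\_cnt}=0$, $\mathit{num\_active\_tasks}=0$, flag $\mathit{done\_marker}=$false; per transaction $j$ a lock-protected $\mathit{txn\_status}[j]=(\text{incarnation}, \text{status})$, initially $(0,\mathtt{READY\_TO\_EXECUTE})$, status $\in\{\mathtt{READY\_TO\_EXECUTE},\mathtt{EXECUTING},\mathtt{EXECUTED},\mathtt{ABORTING}\}$;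 and a lock-protected dependency set $\mathit{txn\_dependency}[j]$, initially empty. MVMemory operations. $\mathtt{read}(p,j)$: among entries $(p,k)$ with $k<j$ take the largest $k$; if none, return NOT_FOUND; if that entry is ESTIMATE return READ_ERROR with blocking index $k$; else return OK with version $(k,\text{incarnation})$ and the value. $\mathtt{record}((j,i),R,W)$: set $\mathit{data}[(p,j)]:=(i,v)$ for each $(p,v)\in W$; remove entries $(p,j)$ for $p$ in the old $\mathit{last\_written\_locations}[j]$ but not written in $W$; store the new location set; store $\mathit{last\_read\_set}[j]:=R$; return whether $W$ wrote a location not in the old set. $\mathtt{convert\_writes\_to\_estimates}(j)$: set $\mathit{data}[(p,j)]:=$ESTIMATE for all $p\in \mathit{last\_written\_locations}[j]$. $\mathtt{validate\_read\_set}(j)$: for each $(p,v)\in\mathit{last\_read\_set}[j]$ redo $\mathtt{read}(p,j)$; return false if it gives READ_ERROR, or NOT_FOUND while $v\neq\bot$, or OK with a version $\neq v$ (including when $v=\bot$); else true. VM.execute($j$): runs $tx_j$ locally, collecting a write-set (last value per location); a read of a location already in the write-set returns that value; otherwise it calls $\mathtt{read}(p,j)$: on NOT_FOUND it reads initial storage and records $(p,\bot)$ in the read-set; on OK it uses the value and records $(p,\text{version})$; on READ_ERROR it stops and returns READ_ERROR with the blocking index. It never writes shared memory. Scheduler. $\mathtt{decrease\_execution\_idx}(t)$ / $\mathtt{decrease\_validation\_idx}(t)$: atomically set the index to $\min(\text{index},t)$, then increment $\mathit{decrease\_cnt}$. $\mathtt{try\_incarnate}(k)$: if $k<n$ and,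 under lock, status of $tx_k$ is $\mathtt{READY\_TO\_EXECUTE}$ with incarnation $i$, set it to $\mathtt{EXECUTING}$ and return $(k,i)$; otherwise decrement $\mathit{num\_active\_tasks}$ and return none. $\mathtt{next\_task}$: if $\mathit{validation\_idx}<\mathit{execution\_idx}$: if $\mathit{validation\_idx}\ge n$ call check_done and return none; else increment $\mathit{num\_active\_tasks}$, fetch-and-increment $\mathit{validation\_idx}$ obtaining $k$; if $k<n$ and status of $tx_k$ is $\mathtt{EXECUTED}$ with incarnation $i$ return validation task $(k,i)$, else decrement $\mathit{num\_active\_tasks}$ and return none. Otherwise analogously: if $\mathit{execution\_idx}\ge n$ call check_done and return none; else increment $\mathit{num\_active\_tasks}$, fetch-and-increment $\mathit{execution\_idx}$ obtaining $k$, return $\mathtt{try\_incarnate}(k)$ as an execution task. $\mathtt{check\_done}$: read $c:=\mathit{decrease\_cnt}$; if $\min(\mathit{execution\_idx},\mathit{validation\_idx})\ge n$ and $\mathit{num\_active\_tasks}=0$ and $\mathit{decrease\_cnt}=c$ (reads in this order), set $\mathit{done\_marker}:=$true. Execution task $(k,i)$: run VM.execute($k$). If READ_ERROR with blocking index $b$: under lock of $\mathit{txn\_dependency}[b]$, if the status of $tx_b$ is $\mathtt{EXECUTED}$ the dependency attempt returns false and the execution task is retried immediately; otherwise set status of $tx_k$ to $\mathtt{ABORTING}$, insert $k$ into $\mathit{txn\_dependency}[b]$, release, decrement $\mathit{num\_active\_tasks}$, no new task. Otherwise call $\mathtt{record}$, obtaining flag $w$, then finish_execution: set status of $tx_k$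 to $\mathtt{EXECUTED}$; swap out $\mathit{txn\_dependency}[k]$ for the empty set; for each dependent $d$ set $\mathit{txn\_status}[d]:=(\text{incarnation}+1,\mathtt{READY\_TO\_EXECUTE})$; if nonempty call $\mathtt{decrease\_execution\_idx}$(min dependent). Then if $\mathit{validation\_idx}>k$: if $w$ call $\mathtt{decrease\_validation\_idx}(k)$, else return validation task $(k,i)$ to the caller (leaving $\mathit{num\_active\_tasks}$ unchanged). If no task was returned, decrement $\mathit{num\_active\_tasks}$. Validation task $(k,i)$: compute $\mathtt{validate\_read\_set}(k)$; if false, try to abort: under lock, if $\mathit{txn\_status}[k]=(i,\mathtt{EXECUTED})$ set status to $\mathtt{ABORTING}$ and ''aborted'' is true. If aborted: $\mathtt{convert\_writes\_to\_estimates}(k)$; set $\mathit{txn\_status}[k]:=(i+1,\mathtt{READY\_TO\_EXECUTE})$; $\mathtt{decrease\_validation\_idx}(k+1)$; if $\mathit{execution\_idx}>k$ and $\mathtt{try\_incarnate}(k)$ returns a version, return that execution task to the caller (with $\mathit{num\_active\_tasks}$ unchanged). Otherwise decrement $\mathit{num\_active\_tasks}$. Each thread runs: while $\mathit{done\_marker}$ is false, perform any task in hand (an execution task may yield a validation task and vice versa), else obtain one via next_task. A thread joins when it exits this loop. Intervals. A pre-validation of $tx_j$ starts when a fetch-and-increment of $\mathit{validation\_idx}$ returns $j$, and finishes just before the corresponding decrement of $\mathit{num\_active\_tasks}$ in next_task, or just before the resulting validation task is returned. Execution of version $(j,i)$ starts when status of $tx_j$ is set to $\mathtt{EXECUTING}$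 with incarnation $i$; it finishes when it is aborted by the dependency mechanism (status set to $\mathtt{ABORTING}$), or just before the final decrement of $\mathit{num\_active\_tasks}$ in finish_execution, or just before a validation task is returned from it. Validation of $(j,i)$ starts when a validation task $(j,i)$ is handed to a thread, and finishes just before the final decrement of $\mathit{num\_active\_tasks}$ in its finishing step, or just before an execution task is returned from it. Global commit index at time $T$: the minimum of $\mathit{validation\_idx}$, all $j$ whose status is not $\mathtt{EXECUTED}$, all indices with an ongoing pre-validation, and all transaction indices of versions with ongoing execution or validation, at time $T$. Transactions $tx_0,\dots,tx_k$ are globally committed at $T$ if the global commit index at $T$ is strictly greater than $k$. *)

(* Defs.v *)
From mathcomp Require Import all_boot ssralg ssrint.
Set Implicit Arguments.
Unset Strict Implicit.
Unset Printing Implicit Defensive.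

Section BlockSTM.
Variables (Loc : eqType) (Val : Type).

Inductive prog :=
| Ret
| Rd of Loc & (Val -> prog)
| Wr of Loc & Val & prog.

Definition wset := seq (Loc * Val).
Fixpoint ws_get (ws : wset) (p : Loc) : option Val :=
  match ws with
  | [::] => None
  | (q, v) :: r => if q == p then Some v else ws_get r p
  end.
Definition ws_upd (ws : wset) (p : Loc) (v : Val) : wset :=
  (p, v) :: [seq e <- ws | e.1 != p].

Fixpoint run_tx (m : Loc -> Val) (pr : prog) (ws : wset) : wset :=
  match pr with
  | Ret => ws
  | Rd p c => run_tx m (c (odflt (m p) (ws_get ws p))) ws
  | Wr p v c => run_tx m c (ws_upd ws p v)
  end.
Definition apply_ws (m : Loc -> Val) (ws : wset) : Loc -> Val :=
  fun p => odflt (m p) (ws_get ws p).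
Fixpoint seq_run (m : Loc -> Val) (txs : seq prog) (w : seq Loc)
  : (Loc -> Val) * seq Loc :=
  match txs with
  | [::] => (m, w)
  | t :: r => let ws := run_tx m t [::] in
              seq_run (apply_ws m ws) r (w ++ map fst ws)
  end.
Definition seq_final (init : Loc -> Val) (txs : seq prog) : Loc -> Val :=
  (seq_run init txs [::]).1.
Definition seq_written (init : Loc -> Val) (txs : seq prog) : seq Loc :=
  (seq_run init txs [::]).2.

Inductive entry := Est | EVal of nat & Val.  (* ESTIMATE | (incarnation, value) *)
Definition mvdata := Loc -> nat -> option entry.
Inductive rres := RNotFound | ROk of nat & nat & Val | RErr of nat.
Fixpoint mvread (d : mvdata) (p : Loc) (j : nat) : rres :=
  match j with
  | 0 => RNotFound
  | j'.+1 => match d p j' with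
             | Some Est => RErr j'
             | Some (EVal i v) => ROk j' i v
             | None => mvread d p j'
             end
  end.
(* read-sets: versions, None = bottom *)
Definition rset := seq (Loc * option (nat * nat)).
Definition entry_valid (d : mvdata) (p : Loc) (k : nat) (v : option (nat * nat)) : bool :=
  match mvread d p k with
  | RNotFound => v == None
  | RErr _ => false
  | ROk j i _ => v == Some (j, i)
  end.

Inductive tstat := READY | EXECUTING | EXECUTED | ABORTING.
Definition is_executed (x : tstat) : bool := if x is EXECUTED then true else false.
Definition is_ready (x : tstat) : bool := if x is READY then true else false.

Record shared := Shared {
  data : mvdata;
  lwl : nat -> seq Loc;            (* last_written_locations *)
  lrs : nat -> rset;               (* last_read_set *)
  eidx : nat;                      (* execution_idx *)
  vidx : nat;                      (* validation_idx *)
  dcnt : nat;                      (* decrease_cnt *)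
  nact : int;                      (* num_active_tasks *)
  dmark : bool;                    (* done_marker *)
  stat : nat -> nat * tstat;       (* txn_status *)
  deps : nat -> seq nat            (* txn_dependency *)
}.

Definition upd {A : eqType} {B : Type} (f : A -> B) (a : A) (b : B) : A -> B :=
  fun x => if x == a then b else f x.
Definition upd_data (d : mvdata) (p : Loc) (k : nat) (e : option entry) : mvdata :=
  fun q j => if (q == p) && (j == k) then e else d q j.

Definition set_data s x := Shared x (lwl s) (lrs s) (eidx s) (vidx s) (dcnt s) (nact s) (dmark s) (stat s) (deps s).
Definition set_lwl s x := Shared (data s) x (lrs s) (eidx s) (vidx s) (dcnt s) (nact s) (dmark s) (stat s) (deps s).
Definition set_lrs s x := Shared (data s) (lwl s) x (eidx s) (vidx s) (dcnt s) (nact s) (dmark s) (stat s) (deps s).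
Definition set_eidx s x := Shared (data s) (lwl s) (lrs s) x (vidx s) (dcnt s) (nact s) (dmark s) (stat s) (deps s).
Definition set_vidx s x := Shared (data s) (lwl s) (lrs s) (eidx s) x (dcnt s) (nact s) (dmark s) (stat s) (deps s).
Definition set_dcnt s x := Shared (data s) (lwl s) (lrs s) (eidx s) (vidx s) x (nact s) (dmark s) (stat s) (deps s).
Definition set_nact s x := Shared (data s) (lwl s) (lrs s) (eidx s) (vidx s) (dcnt s) x (dmark s) (stat s) (deps s).
Definition set_dmark s x := Shared (data s) (lwl s) (lrs s) (eidx s) (vidx s) (dcnt s) (nact s) x (stat s) (deps s).
Definition set_stat s x := Shared (data s) (lwl s) (lrs s) (eidx s) (vidx s) (dcnt s) (nact s) (dmark s) x (deps s).
Definition set_deps s x := Shared (data s) (lwl s) (lrs s) (eidx s) (vidx s) (dcnt s) (nact s) (dmark s) (stat s) x.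

Definition inc_act s := set_nact s (nact s + 1)%R.
Definition dec_act s := set_nact s (nact s - 1)%R.
Definition inc_dcnt s := set_dcnt s (dcnt s).+1.

Definition init_shared : shared :=
  Shared (fun _ _ => None) (fun _ => [::]) (fun _ => [::]) 0 0 0 0%R false
         (fun _ => (0, READY)) (fun _ => [::]).

Inductive task := TExec of nat & nat | TVal of nat & nat.

(* program counters of a thread; the nat arguments are (txn index, incarnation) *)
Inductive tstate :=
| Loop of option task               (* loop head, with the task in hand *)
| Joined of option task
(* next_task *)
| NT_LV | NT_LE of nat
| NV_L | NV_I | NV_F | NV_C of nat | NV_D of nat
| NE_L | NE_I | NE_F
(* try_incarnate k (Some i: called from validation task (k,i)) *)
| TI of nat & option nat | TI_D of nat & option nat
(* check_done *)
| CD0 | CD1 of nat | CD2 of nat & nat | CD3 of nat | CD4 of nat | CD5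
(* execution task: VM.execute, dependency, record, finish_execution *)
| ExRun of nat & nat & prog & wset & rset
| ExDep of nat & nat & nat
| ExDepDec
| RecW of nat & nat & wset & rset & wset
| RecL of nat & nat & wset & rset
| RecR of nat & nat & wset & rset & seq Loc & seq Loc
| RecSL of nat & nat & wset & rset & seq Loc
| RecSR of nat & nat & rset & bool
| Fin0 of nat & nat & bool
| Fin1 of nat & nat & bool
| Fin2 of nat & nat & bool & seq nat & seq nat
| Fin3 of nat & nat & bool & nat
| Fin4 of nat & nat & bool
| Fin5 of nat & nat & bool
| Fin6 of nat & nat | Fin7 of nat & nat | Fin8 of nat & nat
(* validation task *)
| VLR of nat & nat | VChk of nat & nat & rset | VAb of nat & nat
| VConv of nat & nat | VEst of nat & nat & seq Loc | VSR of nat & nat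
| VD1 of nat & nat | VD2 of nat & nat | VLE of nat & nat | VFin of nat & nat.

Definition seqmin (s : seq nat) : nat := foldr minn (head 0 s) s.

Section Steps.
Variables (init : Loc -> Val) (txs : seq prog).
Local Notation n := (size txs).
Local Notation tx k := (nth Ret txs k).

Definition start (t : task) : tstate :=
  match t with
  | TExec k i => ExRun k i (tx k) [::] [::]
  | TVal k i => VLR k i
  end.

(* one atomic operation (on shared memory, possibly with local computation) *)
Inductive tstep : shared -> tstate -> shared -> tstate -> Prop :=
| S_done s ot : dmark s = true -> tstep s (Loop ot) s (Joined ot)
| S_task s t : dmark s = false -> tstep s (Loop (Some t)) s (start t)
| S_next s : dmark s = false -> tstep s (Loop None) s NT_LV
| S_NT_LV s : tstep s NT_LV s (NT_LE (vidx s))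
| S_NT_LE s v : tstep s (NT_LE v) s (if v < eidx s then NV_L else NE_L)
| S_NV_L s : tstep s NV_L s (if n <= vidx s then CD0 else NV_I)
| S_NV_I s : tstep s NV_I (inc_act s) NV_F
| S_NV_F s : tstep s NV_F (set_vidx s (vidx s).+1) (NV_C (vidx s))
| S_NV_C s k : tstep s (NV_C k) s
    (if (k < n) && is_executed (stat s k).2 then Loop (Some (TVal k (stat s k).1))
     else NV_D k)
| S_NV_D s k : tstep s (NV_D k) (dec_act s) (Loop None)
| S_NE_L s : tstep s NE_L s (if n <= eidx s then CD0 else NE_I)
| S_NE_I s : tstep s NE_I (inc_act s) NE_F
| S_NE_F s : tstep s NE_F (set_eidx s (eidx s).+1) (TI (eidx s) None)
| S_TI_ok s k vo : k < n -> is_ready (stat s k).2 ->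
    tstep s (TI k vo) (set_stat s (upd (stat s) k ((stat s k).1, EXECUTING)))
          (Loop (Some (TExec k (stat s k).1)))
| S_TI_fail s k vo : ~~ ((k < n) && is_ready (stat s k).2) ->
    tstep s (TI k vo) s (TI_D k vo)
| S_TI_D s k vo : tstep s (TI_D k vo) (dec_act s) (Loop None)
| S_CD0 s : tstep s CD0 s (CD1 (dcnt s))
| S_CD1 s c : tstep s (CD1 c) s (CD2 c (eidx s))
| S_CD2 s c e : tstep s (CD2 c e) s (if n <= minn e (vidx s) then CD3 c else Loop None)
| S_CD3 s c : tstep s (CD3 c) s (if nact s == 0%R then CD4 c else Loop None)
| S_CD4 s c : tstep s (CD4 c) s (if dcnt s == c then CD5 else Loop None)
| S_CD5 s : tstep s CD5 (set_dmark s true) (Loop None)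
| S_Ex_ret s k i ws rs : tstep s (ExRun k i Ret ws rs) s (RecW k i ws rs ws)
| S_Ex_wr s k i p v c ws rs :
    tstep s (ExRun k i (Wr p v c) ws rs) s (ExRun k i c (ws_upd ws p v) rs)
| S_Ex_rd_local s k i p c ws rs v : ws_get ws p = Some v ->
    tstep s (ExRun k i (Rd p c) ws rs) s (ExRun k i (c v) ws rs)
| S_Ex_rd_mv s k i p c ws rs : ws_get ws p = None ->
    tstep s (ExRun k i (Rd p c) ws rs) s
      (match mvread (data s) p k with
       | RNotFound => ExRun k i (c (init p)) ws (rcons rs (p, None))
       | ROk j i' v => ExRun k i (c v) ws (rcons rs (p, Some (j, i')))
       | RErr b => ExDep k i b
       end)
(* dependency (atomic critical section) *)
| S_ExDep_retry s k i b : is_executed (stat s b).2 ->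
    tstep s (ExDep k i b) s (ExRun k i (tx k) [::] [::])
| S_ExDep_abort s k i b : ~~ is_executed (stat s b).2 ->
    tstep s (ExDep k i b)
      (set_deps (set_stat s (upd (stat s) k ((stat s k).1, ABORTING)))
                (upd (deps s) b (if k \in deps s b then deps s b else k :: deps s b)))
      ExDepDec
| S_ExDepDec s : tstep s ExDepDec (dec_act s) (Loop None)
(* record: write entries (in any order), load old locations, remove stale
   entries (in any order), store locations, store read-set *)
| S_RecW s k i ws rs pre post p v :
    tstep s (RecW k i ws rs (pre ++ (p, v) :: post))
          (set_data s (upd_data (data s) p k (Some (EVal i v))))
          (RecW k i ws rs (pre ++ post))
| S_RecW_done s k i ws rs : tstep s (RecW k i ws rs [::]) s (RecL k i ws rs)
| S_RecL s k i ws rs : tstep s (RecL k i ws rs) s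
    (RecR k i ws rs (lwl s k) [seq q <- lwl s k | q \notin map fst ws])
| S_RecR s k i ws rs prev pre post q :
    tstep s (RecR k i ws rs prev (pre ++ q :: post))
          (set_data s (upd_data (data s) q k None))
          (RecR k i ws rs prev (pre ++ post))
| S_RecR_done s k i ws rs prev : tstep s (RecR k i ws rs prev [::]) s (RecSL k i ws rs prev)
| S_RecSL s k i ws rs prev :
    tstep s (RecSL k i ws rs prev) (set_lwl s (upd (lwl s) k (map fst ws)))
          (RecSR k i rs (has (fun q => q \notin prev) (map fst ws)))
| S_RecSR s k i rs w : tstep s (RecSR k i rs w) (set_lrs s (upd (lrs s) k rs)) (Fin0 k i w)
| S_Fin0 s k i w : tstep s (Fin0 k i w)
    (set_stat s (upd (stat s) k ((stat s k).1, EXECUTED))) (Fin1 k i w)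
| S_Fin1 s k i w : tstep s (Fin1 k i w) (set_deps s (upd (deps s) k [::]))
    (Fin2 k i w (deps s k) (deps s k))
| S_Fin2 s k i w ds pre post d : tstep s (Fin2 k i w ds (pre ++ d :: post))
    (set_stat s (upd (stat s) d ((stat s d).1.+1, READY))) (Fin2 k i w ds (pre ++ post))
| S_Fin2_done s k i w ds : tstep s (Fin2 k i w ds [::]) s
    (if ds is [::] then Fin5 k i w else Fin3 k i w (seqmin ds))
| S_Fin3 s k i w t : tstep s (Fin3 k i w t) (set_eidx s (minn (eidx s) t)) (Fin4 k i w)
| S_Fin4 s k i w : tstep s (Fin4 k i w) (inc_dcnt s) (Fin5 k i w)
| S_Fin5 s k i w : tstep s (Fin5 k i w) s
    (if k < vidx s then (if w then Fin6 k i else Loop (Some (TVal k i))) else Fin8 k i)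
| S_Fin6 s k i : tstep s (Fin6 k i) (set_vidx s (minn (vidx s) k)) (Fin7 k i)
| S_Fin7 s k i : tstep s (Fin7 k i) (inc_dcnt s) (Fin8 k i)
| S_Fin8 s k i : tstep s (Fin8 k i) (dec_act s) (Loop None)
| S_VLR s k i : tstep s (VLR k i) s (VChk k i (lrs s k))
| S_VChk s k i pre post p v : tstep s (VChk k i (pre ++ (p, v) :: post)) s
    (if entry_valid (data s) p k v then VChk k i (pre ++ post) else VAb k i)
| S_VChk_done s k i : tstep s (VChk k i [::]) s (VFin k i)
| S_VAb_ok s k i : (stat s k).1 = i -> is_executed (stat s k).2 ->
    tstep s (VAb k i) (set_stat s (upd (stat s) k (i, ABORTING))) (VConv k i)
| S_VAb_fail s k i : ~~ (((stat s k).1 == i) && is_executed (stat s k).2) ->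
    tstep s (VAb k i) s (VFin k i)
| S_VConv s k i : tstep s (VConv k i) s (VEst k i (lwl s k))
| S_VEst s k i pre post p : tstep s (VEst k i (pre ++ p :: post))
    (set_data s (upd_data (data s) p k (Some Est))) (VEst k i (pre ++ post))
| S_VEst_done s k i : tstep s (VEst k i [::]) s (VSR k i)
| S_VSR s k i : tstep s (VSR k i) (set_stat s (upd (stat s) k (i.+1, READY))) (VD1 k i)
| S_VD1 s k i : tstep s (VD1 k i) (set_vidx s (minn (vidx s) k.+1)) (VD2 k i)
| S_VD2 s k i : tstep s (VD2 k i) (inc_dcnt s) (VLE k i)
| S_VLE s k i : tstep s (VLE k i) s (if k < eidx s then TI k (Some i) else VFin k i)
| S_VFin s k i : tstep s (VFin k i) (dec_act s) (Loop None).

Definition config := (shared * seq tstate)%type.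

Inductive step : config -> config -> Prop :=
| Step s ts t s' x' : t < size ts -> tstep s (nth (Loop None) ts t) s' x' ->
    step (s, ts) (s', set_nth (Loop None) ts t x').

(* configurations occurring at some time of some run with [m] threads *)
Inductive reachable (m : nat) : config -> Prop :=
| R_init : reachable m (init_shared, nseq m (Loop None))
| R_step c c' : reachable m c -> step c c' -> reachable m c'.

(* transaction indices of ongoing pre-validations / executions / validations *)
Definition ongoing (x : tstate) : seq nat :=
  match x with
  | Loop (Some (TExec k _)) | Loop (Some (TVal k _))
  | Joined (Some (TExec k _)) | Joined (Some (TVal k _)) => [:: k]
  | NV_C k | NV_D k => [:: k]                                  (* pre-validation *)
  | TI k (Some _) | TI_D k (Some _) => [:: k]                  (* validation *)
  | ExRun k _ _ _ _ | ExDep k _ _ => [:: k]                    (* execution *)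
  | RecW k _ _ _ _ | RecL k _ _ _ | RecR k _ _ _ _ _ | RecSL k _ _ _ _
  | RecSR k _ _ _ => [:: k]
  | Fin0 k _ _ | Fin1 k _ _ | Fin2 k _ _ _ _ | Fin3 k _ _ _ | Fin4 k _ _
  | Fin5 k _ _ | Fin6 k _ | Fin7 k _ | Fin8 k _ => [:: k]
  | VLR k _ | VChk k _ _ | VAb k _ | VConv k _ | VEst k _ _ | VSR k _
  | VD1 k _ | VD2 k _ | VLE k _ | VFin k _ => [:: k]          (* validation *)
  | _ => [::]
  end.

(* global commit index at a configuration *)
Definition gci (c : config) : nat :=
  foldr minn (vidx c.1)
    (flatten (map ongoing c.2) ++
     [seq j <- iota 0 n | ~~ is_executed (stat c.1 j).2]).

End Steps.
End BlockSTM.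

(* Main.v *)
Require Import Defs.
From mathcomp Require Import all_boot ssralg ssrint zify.
From Stdlib Require List.
Local Notation In := List.In.
Set Implicit Arguments.
Unset Strict Implicit.
Unset Printing Implicit Defensive.

Section Proof.
Variables (Loc : eqType) (Val : Type) (init : Loc -> Val) (txs : seq (prog Loc Val)).
Local Notation n := (size txs).
Local Notation tx k := (nth (Ret Loc Val) txs k).
Local Notation wset := (wset Loc Val).
Local Notation rset := (rset Loc).
Local Notation prog := (prog Loc Val).
Local Notation mvdata := (mvdata Loc Val).
Local Notation EST := (Some (Est Val)).

Definition ghost := nat -> nat -> option wset.

Definition valof (W : ghost) (p : Loc) (ver : option (nat * nat)) : option Val :=
  match ver with
  | None => Some (init p)
  | Some (k, i) => obind (fun ws => ws_get ws p) (W k i)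
  end.

Inductive Pre (W : ghost) (pr0 : prog) : prog -> wset -> rset -> Prop :=
| P0 : Pre W pr0 pr0 [::] [::]
| PWr p v c ws rs : Pre W pr0 (Wr p v c) ws rs -> Pre W pr0 c (ws_upd ws p v) rs
| PRdL p c ws rs v : Pre W pr0 (Rd p c) ws rs -> ws_get ws p = Some v ->
    Pre W pr0 (c v) ws rs
| PRdM p c ws rs ver v : Pre W pr0 (Rd p c) ws rs -> ws_get ws p = None ->
    valof W p ver = Some v -> Pre W pr0 (c v) ws (rcons rs (p, ver)).

Definition ghost_le (W W' : ghost) := forall k i ws, W k i = Some ws -> W' k i = Some ws.

Lemma valof_mono W W' p ver v : ghost_le W W' -> valof W p ver = Some v -> valof W' p ver = Some v.
Proof.
move=> le; case: ver => [[k i]|] //=.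
by case E: (W k i) => [ws|] //=; rewrite (le _ _ _ E).
Qed.

Lemma Pre_mono W W' pr0 pr ws rs : ghost_le W W' -> Pre W pr0 pr ws rs -> Pre W' pr0 pr ws rs.
Proof.
move=> le; elim=> {pr ws rs}.
- exact: P0.
- by move=> *; apply: PWr.
- by move=> *; apply: PRdL; eauto.
- by move=> p c ws rs ver v _ IH H1 H2; apply: PRdM IH H1 (valof_mono le H2).
Qed.

Lemma ws_get_in (ws : wset) (p : Loc) : isSome (ws_get ws p) = (p \in map fst ws).
Proof.
elim: ws => [|[q v] ws IH] //=; rewrite in_cons.
by case: (q =P p) => [->|/eqP]; rewrite ?eqxx //= eq_sym => /negbTE ->.
Qed.

Lemma In_map_fst (ws : wset) p v : In (p, v) ws -> p \in map fst ws.
Proof.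
elim: ws => [|[q w] ws IH] //= [[-> _]|H]; rewrite in_cons ?eqxx //.
by rewrite IH ?orbT.
Qed.

Lemma ws_get_mem (ws : wset) p v : uniq (map fst ws) -> In (p, v) ws -> ws_get ws p = Some v.
Proof.
elim: ws => [|[q w] ws IH] //= /andP [nq u] [[-> ->]|H].
  by rewrite eqxx.
case: (q =P p) => [E|_]; last by apply: IH.
by subst q; move: nq => /negP []; apply: In_map_fst H.
Qed.

Lemma ws_get_some (ws : wset) p v : ws_get ws p = Some v -> p \in map fst ws.
Proof. by move=> H; rewrite -ws_get_in H. Qed.

Lemma uniq_ws_upd (ws : wset) p v : uniq (map fst ws) -> uniq (map fst (ws_upd ws p v)).
Proof.
move=> u; rewrite /ws_upd /=.
have -> : [seq i.1 | i <- [seq e <- ws | e.1 != p]] = [seq x <- [seq i.1 | i <- ws] | x != p].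
  by rewrite filter_map.
by rewrite filter_uniq // andbT mem_filter eqxx.
Qed.

Lemma Pre_uniq W pr0 pr ws rs : Pre W pr0 pr ws rs -> uniq (map fst ws).
Proof. by elim=> // *; apply: uniq_ws_upd. Qed.

Lemma Pre_run W pr0 pr ws rs (m : Loc -> Val) : Pre W pr0 pr ws rs ->
  (forall e, e \in rs -> valof W e.1 e.2 = Some (m e.1)) ->
  run_tx m pr0 [::] = run_tx m pr ws.
Proof.
elim=> {pr ws rs}; first by [].
- by move=> p v c ws rs _ IH /IH ->.

- by move=> p c ws rs v _ IH E /IH ->; rewrite /= E.
- move=> p c ws rs ver v _ IH E V H.
  rewrite IH /=; last by move=> e He; apply: H; rewrite mem_rcons in_cons He orbT.
  rewrite E /=; have := H (p, ver); rewrite mem_rcons in_cons eqxx /= V => /(_ isT).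
  by case=> ->.
Qed.

Lemma mvread_upd_other (d : mvdata) p k (e : option (entry Val)) q j : (q != p) || (j <= k) ->
  mvread (upd_data d p k e) q j = mvread d q j.
Proof.
move=> H; elim: j H => [|j IH] //= H.
have -> : upd_data d p k e q j = d q j.
  rewrite /upd_data; case: (q =P p) H => //= -> ; rewrite ?eqxx /=.
  by move=> H; case: (j =P k) => // E; subst; rewrite ltnn in H.
case: (d q j) => [[|i v]|] //; apply: IH.
by case/orP: H => [->//|H]; rewrite ltnW ?orbT.
Qed.

Lemma mvread_est (d : mvdata) p k (e : option (entry Val)) j : d p k = EST -> k < j ->
  (forall b, mvread d p j <> @RErr Val b) ->
  mvread (upd_data d p k e) p j = mvread d p j.
Proof.
move=> Hk; elim: j => [|j IH] //= Hkj Hne.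
have [Ejk|Njk] := eqVneq j k.
  by subst; move: Hne; rewrite Hk => /(_ k).
have -> : upd_data d p k e p j = d p j by rewrite /upd_data eqxx /= (negbTE Njk).
move: Hne; case: (d p j) => [[|i v]|] // Hne.
have Hkj' : k < j by rewrite ltn_neqAle eq_sym Njk -ltnS.
by apply: IH.
Qed.

Lemma valid_noerr (d : mvdata) p j v : entry_valid d p j v -> forall b, mvread d p j <> @RErr Val b.
Proof. by rewrite /entry_valid => H b E; rewrite E in H. Qed.

Lemma valid_upd_est (d : mvdata) p k (e : option (entry Val)) q j v : d p k = EST ->
  entry_valid d q j v -> entry_valid (upd_data d p k e) q j v.
Proof.
move=> Hk Hv.
have [Eq|Nq] := eqVneq q p; last by rewrite /entry_valid mvread_upd_other ?Nq.
subst q; have [Hkj|Hjk] := ltnP k j.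
  by rewrite /entry_valid mvread_est // ; apply: valid_noerr Hv.
by rewrite /entry_valid mvread_upd_other ?Hjk ?orbT.
Qed.

Lemma valid_upd_high (d : mvdata) p k (e : option (entry Val)) q j v : j <= k ->
  entry_valid (upd_data d p k e) q j v = entry_valid d q j v.
Proof. by move=> H; rewrite /entry_valid mvread_upd_other // H orbT. Qed.

Lemma mvread_ROk (d : mvdata) p j k i v : mvread d p j = ROk k i v -> d p k = Some (EVal i v).
Proof.
elim: j => [|j IH] //=.
case E: (d p j) => [[|i' v']|] H //; last exact: IH H.
by case: H => <- <- <-.
Qed.

Lemma mvread_NF (d : mvdata) p j : mvread d p j = RNotFound Val -> forall k, k < j -> d p k = None.
Proof.
elim: j => [|j IH] //=.
case E: (d p j) => [[|i' v']|] H // k; rewrite ltnS leq_eqVlt => /orP [/eqP ->//|].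
exact: IH.
Qed.

Lemma seq_run_cat (m : Loc -> Val) (a b : seq prog) (w : seq Loc) : seq_run m (a ++ b) w =
  seq_run (seq_run m a w).1 b (seq_run m a w).2.
Proof. by elim: a m w => [|t a IH] m w //=. Qed.

Definition sr j := seq_run init (take j txs) [::].

Lemma sr_S j : j < n ->
  sr j.+1 = (apply_ws (sr j).1 (run_tx (sr j).1 (tx j) [::]),
             (sr j).2 ++ map fst (run_tx (sr j).1 (tx j) [::])).
Proof. by move=> H; rewrite /sr (take_nth (Ret Loc Val) H) -cats1 seq_run_cat. Qed.

End Proof.


Arguments Loop {Loc Val} _.
Arguments Joined {Loc Val} _.
Arguments NT_LV {Loc Val}. Arguments NT_LE {Loc Val} _.
Arguments NV_L {Loc Val}. Arguments NV_I {Loc Val}. Arguments NV_F {Loc Val}.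
Arguments NV_C {Loc Val} _. Arguments NV_D {Loc Val} _.
Arguments NE_L {Loc Val}. Arguments NE_I {Loc Val}. Arguments NE_F {Loc Val}.
Arguments TI {Loc Val} _ _. Arguments TI_D {Loc Val} _ _.
Arguments CD0 {Loc Val}. Arguments CD1 {Loc Val} _. Arguments CD2 {Loc Val} _ _.
Arguments CD3 {Loc Val} _. Arguments CD4 {Loc Val} _. Arguments CD5 {Loc Val}.
Arguments ExDep {Loc Val} _ _ _. Arguments ExDepDec {Loc Val}.
Arguments RecSR {Loc Val} _ _ _ _.
Arguments Fin0 {Loc Val} _ _ _. Arguments Fin1 {Loc Val} _ _ _.
Arguments Fin2 {Loc Val} _ _ _ _ _. Arguments Fin3 {Loc Val} _ _ _ _.
Arguments Fin4 {Loc Val} _ _ _. Arguments Fin5 {Loc Val} _ _ _.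
Arguments Fin6 {Loc Val} _ _. Arguments Fin7 {Loc Val} _ _. Arguments Fin8 {Loc Val} _ _.
Arguments VLR {Loc Val} _ _. Arguments VChk {Loc Val} _ _ _. Arguments VAb {Loc Val} _ _.
Arguments VConv {Loc Val} _ _. Arguments VEst {Loc Val} _ _ _. Arguments VSR {Loc Val} _ _.
Arguments VD1 {Loc Val} _ _. Arguments VD2 {Loc Val} _ _. Arguments VLE {Loc Val} _ _.
Arguments VFin {Loc Val} _ _.
Arguments Est {Val}. Arguments RErr {Val} _. Arguments RNotFound {Val}.
Arguments Ret {Loc Val}.

Section Inv.
Variables (Loc : eqType) (Val : Type) (init : Loc -> Val) (txs : seq (prog Loc Val)).
Local Notation n := (size txs).
Local Notation tx k := (nth Ret txs k).
Local Notation shared := (shared Loc Val).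
Local Notation tstate := (tstate Loc Val).
Local Notation wset := (wset Loc Val).
Local Notation EST := (Some (@Est Val)).
Local Notation Pre := (Pre init).
Local Notation ghost := (ghost Loc Val).
Local Notation TH ts t := (nth (Loop None) ts t).

Definition clean (s : shared) k := forall p, data s p k = if p \in lwl s k then EST else None.
Definition recdata (s : shared) k i (ws : wset) :=
  forall p, data s p k = omap (EVal i) (ws_get ws p).
Definition recorded (s : shared) (W : ghost) k i := k < n /\ exists ws, W k i = Some ws /\
  lwl s k = map fst ws /\ recdata s k i ws /\ Pre W (tx k) Ret ws (lrs s k).
Definition LF (s : shared) (W : ghost) d :=
  exists i, stat s d = (i, ABORTING) /\ clean s d /\ W d i = None.

Definition owner k (x : tstate) : bool :=
  match x with
  | Loop (Some (TExec k' _)) | Joined (Some (TExec k' _)) => k' == k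
  | ExRun k' _ _ _ _ | ExDep k' _ _ | RecW k' _ _ _ _ | RecL k' _ _ _ | RecR k' _ _ _ _ _
  | RecSL k' _ _ _ _ | RecSR k' _ _ _ | Fin0 k' _ _ | VConv k' _ | VEst k' _ _ | VSR k' _ => k' == k
  | _ => false
  end.

Definition f2rest (x : tstate) : seq nat := if x is Fin2 _ _ _ _ r then r else [::].

Definition TInv (s : shared) (W : ghost) (x : tstate) : Prop :=
  match x with
  | Loop (Some (TExec k i)) | Joined (Some (TExec k i)) | ExDep k i _ =>
      k < n /\ stat s k = (i, EXECUTING) /\ clean s k /\ W k i = None
  | ExRun k i pr ws rs =>
      k < n /\ stat s k = (i, EXECUTING) /\ clean s k /\ W k i = None /\ Pre W (tx k) pr ws rs
  | RecW k i ws rs rest =>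
      k < n /\ stat s k = (i, EXECUTING) /\ W k i = Some ws /\ Pre W (tx k) Ret ws rs /\
      uniq (map fst rest) /\ (forall e, In e rest -> In e ws) /\
      forall p, data s p k = if (p \in map fst ws) && (p \notin map fst rest)
                             then omap (EVal i) (ws_get ws p)
                             else if p \in lwl s k then EST else None
  | RecL k i ws rs =>
      k < n /\ stat s k = (i, EXECUTING) /\ W k i = Some ws /\ Pre W (tx k) Ret ws rs /\
      forall p, data s p k = if p \in map fst ws then omap (EVal i) (ws_get ws p)
                             else if p \in lwl s k then EST else None
  | RecR k i ws rs prev rest =>
      k < n /\ stat s k = (i, EXECUTING) /\ W k i = Some ws /\ Pre W (tx k) Ret ws rs /\
      prev = lwl s k /\ uniq rest /\ (forall q, q \in rest -> q \notin map fst ws) /\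
      forall p, data s p k = if p \in map fst ws then omap (EVal i) (ws_get ws p)
                             else if p \in rest then EST else None
  | RecSL k i ws rs prev =>
      k < n /\ stat s k = (i, EXECUTING) /\ W k i = Some ws /\ Pre W (tx k) Ret ws rs /\
      prev = lwl s k /\ recdata s k i ws
  | RecSR k i rs w =>
      k < n /\ stat s k = (i, EXECUTING) /\ exists ws, W k i = Some ws /\
      Pre W (tx k) Ret ws rs /\ lwl s k = map fst ws /\ recdata s k i ws
  | Fin0 k i w => k < n /\ stat s k = (i, EXECUTING) /\ recorded s W k i
  | Fin2 k i w ds rest =>
      uniq rest /\ forall d, d \in rest -> LF s W d /\ forall b, d \notin deps s b
  | VConv k i => k < n /\ stat s k = (i, ABORTING) /\ W k i <> None /\
      forall p, p \notin lwl s k -> data s p k = None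
  | VEst k i rest => k < n /\ stat s k = (i, ABORTING) /\ W k i <> None /\
      (forall p, p \in rest -> p \in lwl s k) /\
      (forall p, p \notin lwl s k -> data s p k = None) /\
      (forall p, p \in lwl s k -> p \notin rest -> data s p k = EST)
  | VSR k i => k < n /\ stat s k = (i, ABORTING) /\ W k i <> None /\ clean s k
  | _ => True
  end.

Definition good (s : shared) j := forall e, e \in lrs s j -> entry_valid (data s) e.1 j e.2.

Definition helper (s : shared) j (x : tstate) : Prop :=
  match x with
  | NV_C k => k = j
  | Loop (Some (TVal k i)) | Joined (Some (TVal k i)) | VLR k i | VAb k i =>
      k = j /\ i = (stat s j).1
  | VChk k i rest => k = j /\ i = (stat s j).1 /\
      forall e, e \in lrs s j -> e \in rest \/ entry_valid (data s) e.1 j e.2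
  | Fin1 k i w | Fin2 k i w _ _ | Fin3 k i w _ | Fin4 k i w | Fin5 k i w =>
      (k = j /\ i = (stat s j).1) \/ (k < j /\ w)
  | Fin0 k _ w | RecSR k _ _ w => k < j /\ w
  | Fin6 k _ => k <= j
  | RecW k _ ws _ _ | RecL k _ ws _ => k < j /\ has (fun q => q \notin lwl s k) (map fst ws)
  | RecR k _ ws _ prev _ | RecSL k _ ws _ prev => k < j /\ has (fun q => q \notin prev) (map fst ws)
  | VConv k _ | VEst k _ _ | VSR k _ | VD1 k _ => k < j
  | _ => False
  end.

Record Inv (s : shared) (ts : seq tstate) (W : ghost) : Prop := {
  iReady : forall k i, stat s k = (i, READY) -> clean s k /\ W k i = None;
  iExec : forall k i, stat s k = (i, EXECUTED) -> recorded s W k i;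
  iGhost : forall k i, (stat s k).1 < i -> W k i = None;
  iData : forall p k i v, data s p k = Some (EVal i v) -> valof init W p (Some (k, i)) = Some v;
  iHigh : forall p k, n <= k -> data s p k = None;
  iLwl : forall k, uniq (lwl s k);
  iThr : forall t, TInv s W (TH ts t);
  iOwn : forall k t1 t2, t1 <> t2 -> owner k (TH ts t1) -> owner k (TH ts t2) -> False;
  iDeps : forall b d, d \in deps s b -> LF s W d;
  iDepsU : forall b, uniq (deps s b);
  iDepsD : forall b b' d, d \in deps s b -> d \in deps s b' -> b = b';
  iF2 : forall t1 t2 d, t1 <> t2 -> d \in f2rest (TH ts t1) -> d \in f2rest (TH ts t2) -> False;
  iV : forall j i, j < n -> stat s j = (i, EXECUTED) ->
       good s j \/ vidx s <= j \/ exists t, helper s j (TH ts t)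
}.

Lemma Inv_init m : Inv (init_shared Loc Val) (nseq m (Loop None)) (fun _ _ => None).
Proof.
have TH0 t : TH (nseq m (Loop None : tstate)) t = Loop None.
  by rewrite nth_nseq; case: ifP.
split=> //=; try by move=> *; rewrite ?TH0.
- by move=> k t1 t2 _; rewrite !TH0.
- by move=> t1 t2 d _; rewrite !TH0.
Qed.


Ltac destr_x x := destruct x as [[[? ?|? ?]|]|[[? ?|? ?]|]| | | | | | | | | | | | | | | | | | | | | | | | | | | | | | | | | | | | | | | | | | | | |].

Lemma owner_lt s W x k : TInv s W x -> owner k x -> k < n.
Proof. by destr_x x => //= H /eqP E; subst; case: H. Qed.

Lemma owner_stat s W x k : TInv s W x -> owner k x ->
  (exists i, stat s k = (i, EXECUTING)) \/ (exists i, stat s k = (i, ABORTING) /\ W k i <> None).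
Proof.
destr_x x => //= H /eqP E; subst; case: H => _ [H H'];
  solve [left; eexists; eassumption | right; eexists; split; [eassumption|]; by case: H'].
Qed.

Lemma owner_notLF s W x k : TInv s W x -> owner k x -> LF s W k -> False.
Proof.
move=> H O [i [Hs [_ Hw]]]; case: (owner_stat H O) => [[i' E]|[i' [E Hw']]];
  rewrite Hs in E => //; case: E => E; subst; exact: Hw' Hw.
Qed.

Definition agree (s s' : shared) (W W' : ghost) k :=
  [/\ stat s' k = stat s k, forall p, data s' p k = data s p k, lwl s' k = lwl s k,
      lrs s' k = lrs s k & forall i, W' k i = W k i].

Lemma clean_agree s s' W W' k : agree s s' W W' k -> clean s k -> clean s' k.
Proof. by case=> _ Hd Hl _ _ H p; rewrite Hd Hl H. Qed.

Lemma recdata_agree s s' W W' k i ws : agree s s' W W' k -> recdata s k i ws -> recdata s' k i ws.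
Proof. by case=> _ Hd _ _ _ H p; rewrite Hd H. Qed.

Lemma recorded_agree s s' W W' k i : ghost_le W W' -> agree s s' W W' k ->
  recorded s W k i -> recorded s' W' k i.
Proof.
move=> le A [Hk [ws [Hw [Hl [Hd Hp]]]]]; case: (A) => _ _ El Er Ew.
split => //; exists ws; rewrite Ew El Er; do !split => //; first exact: recdata_agree A Hd.
exact: Pre_mono le Hp.
Qed.

Lemma LF_agree s s' W W' d : agree s s' W W' d -> LF s W d -> LF s' W' d.
Proof.
move=> A [i [Hs [Hc Hw]]]; case: (A) => Es _ _ _ Ew.
by exists i; rewrite Es Ew; do !split => //; apply: clean_agree A Hc.
Qed.

Lemma TInv_frame s s' W W' x : ghost_le W W' ->
  (forall k, owner k x -> agree s s' W W' k) ->
  (forall d, d \in f2rest x -> agree s s' W W' d /\ forall b, d \in deps s' b -> d \in deps s b) ->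
  TInv s W x -> TInv s' W' x.
Proof.
move=> le HO HF; destr_x x => //=; try (have A := HO _ (eqxx _); case: (A) => Es Ed El Er Ew).
all: try (by case=> Hk [Hs [Hc Hw]]; rewrite Es Ew; do !split => //; apply: clean_agree A Hc).
- by case=> Hk [Hs [Hc [Hw Hp]]]; rewrite Es Ew; do !split => //;
    [apply: clean_agree A Hc | apply: Pre_mono le Hp].
- case=> Hk [Hs [Hw [Hp [Hu [Hin Hd]]]]]; rewrite Es Ew; do !split => //;
    [apply: Pre_mono le Hp| by move=> p; rewrite Ed El Hd].
- case=> Hk [Hs [Hw [Hp Hd]]]; rewrite Es Ew; do !split => //;
    [apply: Pre_mono le Hp| by move=> p; rewrite Ed El Hd].
- case=> Hk [Hs [Hw [Hp [Hpr [Hu [Hq Hd]]]]]]; rewrite Es Ew El; do !split => //;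
    [apply: Pre_mono le Hp| by move=> p; rewrite Ed Hd].
- case=> Hk [Hs [Hw [Hp [Hpr Hd]]]]; rewrite Es Ew El; do !split => //;
    [apply: Pre_mono le Hp| apply: recdata_agree A Hd].
- case=> Hk [Hs [ws [Hw [Hp [Hl Hd]]]]]; rewrite Es; do !split => //; exists ws; rewrite Ew El;
    do !split => //; [apply: Pre_mono le Hp| apply: recdata_agree A Hd].
- by case=> Hk [Hs Hr]; rewrite Es; split => //; split => //; apply: recorded_agree le A Hr.
- case=> Hu H; split => // d Hd; case: (H d Hd) => HL HB; case: (HF d Hd) => A HD.
  split; first exact: LF_agree A HL.
  by move=> bb; apply/negP => /HD; apply/negP.
- by case=> Hk [Hs [Hw Hd]]; rewrite Es Ew El; do !split => //; move=> p; rewrite Ed; apply: Hd.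
- by case=> Hk [Hs [Hw [H1 [H2 H3]]]]; rewrite Es Ew El; do !split => //; move=> p; rewrite Ed;
    [apply: H2| apply: H3].
- by case=> Hk [Hs [Hw Hc]]; rewrite Es Ew; do !split => //; apply: clean_agree A Hc.
Qed.


Lemma helper_frame s s' j x : helper s j x -> (stat s' j).1 = (stat s j).1 ->
  lrs s' j = lrs s j ->
  (forall e, entry_valid (data s) e.1 j e.2 -> entry_valid (data s') e.1 j e.2) ->
  (forall k, owner k x -> lwl s' k = lwl s k) -> helper s' j x.
Proof.
move=> H Es Er Ev Eo; destr_x x => //=; move: H => /=; rewrite ?Es //.
all: try by rewrite (Eo _ (eqxx _)).
case=> -> [E H]; split=> //; split=> // e; rewrite Er => /H [->|/Ev ->]; by [left|right].
Qed.

Lemma good_frame s s' j : good s j -> lrs s' j = lrs s j ->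
  (forall e, entry_valid (data s) e.1 j e.2 -> entry_valid (data s') e.1 j e.2) -> good s' j.
Proof. by move=> H Er Ev e; rewrite Er => /H /Ev. Qed.

Lemma Inv_irrel s s' ts W : data s' = data s -> lwl s' = lwl s -> lrs s' = lrs s ->
  stat s' = stat s -> deps s' = deps s -> vidx s' <= vidx s -> Inv s ts W -> Inv s' ts W.
Proof.
case: s => d l r e v dc na dm st de; case: s' => d' l' r' e' v' dc' na' dm' st' de' /=.
move=> -> -> -> -> -> Hv [] H1 H2 H3 H4 H5 H6 H7 H8 H9 H10 H11 H12 H13; split => //.
move=> j i Hj Hs; case: (H13 j i Hj Hs) => [H|[H|H]]; [by left | | by right; right].
by right; left; apply: leq_trans H.
Qed.

Lemma nth_set (ts : seq tstate) t x' t' :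
  TH (set_nth (Loop None) ts t x') t' = if t' == t then x' else TH ts t'.
Proof. by rewrite nth_set_nth. Qed.

Lemma Inv_local s ts W t x' : Inv s ts W ->
  TInv s W x' ->
  (forall k, owner k x' -> owner k (TH ts t)) ->
  (forall d, d \in f2rest x' -> d \in f2rest (TH ts t)) ->
  (forall j i, j < n -> stat s j = (i, EXECUTED) -> helper s j (TH ts t) ->
     helper s j x' \/ good s j \/ vidx s <= j) ->
  Inv s (set_nth (Loop None) ts t x') W.
Proof.
move=> I HT HO HF HV; case: (I) => *; split => //.
- by move=> t'; rewrite nth_set; case: eqP => // _; apply: iThr I.
- move=> k t1 t2 N; rewrite !nth_set.
  case: (t1 =P t) => [E1|_]; case: (t2 =P t) => [E|_] //; try (by subst; subst);
    move=> O1 O2; apply: (iOwn I) N _ _; eauto; subst; eauto.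
- move=> t1 t2 d N; rewrite !nth_set.
  case: (t1 =P t) => [E1|_]; case: (t2 =P t) => [E|_] //; try (by subst; subst);
    move=> O1 O2; apply: (iF2 I) N _ _; eauto; subst; eauto.
- move=> j i Hj Hs; case: (iV I Hj Hs) => [H|[H|[t' H]]]; [by left|by right; left|].
  case: (t' =P t) => [E|N]; last by right; right; exists t'; rewrite nth_set; case: eqP.
  subst t'; case: (HV j i Hj Hs H) => [H'|[H'|H']]; [|by left|by right;left].
  by right; right; exists t; rewrite nth_set eqxx.
Qed.


Lemma f2rest_LF s W x d : TInv s W x -> d \in f2rest x -> LF s W d /\ forall b, d \notin deps s b.
Proof. by destr_x x => //= [[_ H]] /H. Qed.

Lemma f2rest_Fin2 (x : tstate) d : d \in f2rest x -> exists k i w ds r, x = Fin2 k i w ds r.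
Proof. by destr_x x => //= _; do 5 eexists. Qed.

Lemma other_thr s s' ts W W' t k0 : Inv s ts W -> ghost_le W W' ->
  (forall k, k != k0 -> agree s s' W W' k) ->
  (forall b d, d \in deps s' b -> d \in deps s b \/ d = k0) ->
  (owner k0 (TH ts t) \/ (exists i, stat s k0 = (i, READY)) \/
   (exists i, stat s k0 = (i, EXECUTED)) \/ k0 \in f2rest (TH ts t)) ->
  forall t', t' <> t -> TInv s' W' (TH ts t').
Proof.
move=> I le HA HD HK t' N; have HT := iThr I t'.
have NO : ~~ owner k0 (TH ts t').
  apply/negP => O; case: HK => [O'|[[i E]|[[i E]|F]]].
  - exact: (iOwn I) N O O'.
  - by case: (owner_stat HT O) => [[i' E']|[i' [E' _]]]; rewrite E in E'.
  - by case: (owner_stat HT O) => [[i' E']|[i' [E' _]]]; rewrite E in E'.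
  - by case: (f2rest_LF (iThr I t) F) => L _; apply: owner_notLF HT O L.
apply: TInv_frame (iThr I t') => //.
  by move=> k O; apply: HA; apply/eqP => E; subst; rewrite O in NO.
move=> d F; case: (f2rest_LF HT F) => [[i [E _]] ND].
have Nd : d != k0.
  apply/eqP => E'; subst; case: HK => [O'|[[i' E']|[[i' E']|F']]].
  - by case: (f2rest_LF HT F) => L _; apply: owner_notLF (iThr I t) O' L.
  - by rewrite E in E'.
  - by rewrite E in E'.
  - exact: (iF2 I) N F F'.
split; first exact: HA.
by move=> b /HD [//|E']; rewrite E' eqxx in Nd.
Qed.

Lemma other_thr_all s s' ts W W' : Inv s ts W -> ghost_le W W' ->
  (forall k, agree s s' W W' k) ->
  (forall b d, d \in deps s' b -> d \in deps s b) ->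
  forall t', TInv s' W' (TH ts t').
Proof.
move=> I le HA HD t'; apply: TInv_frame (iThr I t') => // d F; split; [exact: HA | move=> b; exact: HD].
Qed.

Lemma iOwn_gen s ts W t x' : Inv s ts W ->
  (forall k, owner k x' -> owner k (TH ts t) \/ (exists i, stat s k = (i, READY)) \/
                           (exists i, stat s k = (i, EXECUTED))) ->
  forall k t1 t2, t1 <> t2 -> owner k (TH (set_nth (Loop None) ts t x') t1) ->
    owner k (TH (set_nth (Loop None) ts t x') t2) -> False.
Proof.
move=> I HO k t1 t2 N; rewrite !nth_set.
have G t' : t' <> t -> owner k x' -> owner k (TH ts t') -> False.
  move=> N' O1 O2; case: (HO k O1) => [O|[[i E]|[i E]]].
  - by apply: (iOwn I) N' O2 O.
  - by case: (owner_stat (iThr I t') O2) => [[i' E']|[i' [E' _]]]; rewrite E in E'.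
  - by case: (owner_stat (iThr I t') O2) => [[i' E']|[i' [E' _]]]; rewrite E in E'.
case: (t1 =P t) => [E1|N1]; case: (t2 =P t) => [E2|N2].
- by subst; subst.
- by move=> O1 O2; apply: G O1 O2.
- by move=> O1 O2; apply: G O2 O1.
- exact: (iOwn I).
Qed.

Lemma iF2_gen s ts W t x' : Inv s ts W ->
  (forall d, d \in f2rest x' -> d \in f2rest (TH ts t) \/ exists b, d \in deps s b) ->
  forall t1 t2 d, t1 <> t2 -> d \in f2rest (TH (set_nth (Loop None) ts t x') t1) ->
    d \in f2rest (TH (set_nth (Loop None) ts t x') t2) -> False.
Proof.
move=> I HF t1 t2 d N; rewrite !nth_set.
have G t' : t' <> t -> d \in f2rest x' -> d \in f2rest (TH ts t') -> False.
  move=> N' O1 O2; case: (HF d O1) => [O|[b Hb]].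
  - by apply: (iF2 I) N' O2 O.
  - by case: (f2rest_LF (iThr I t') O2) => _ /(_ b); rewrite Hb.
case: (t1 =P t) => [E1|N1]; case: (t2 =P t) => [E2|N2].
- by subst; subst.
- by move=> O1 O2; apply: G O1 O2.
- by move=> O1 O2; apply: G O2 O1.
- exact: (iF2 I).
Qed.

Lemma iV_gen s s' ts W t x' : Inv s ts W ->
  vidx s' <= vidx s ->
  (forall j i, j < n -> stat s' j = (i, EXECUTED) ->
     (stat s j = (i, EXECUTED) /\ lrs s' j = lrs s j) \/ helper s' j x') ->
  (forall j, (forall e, entry_valid (data s) e.1 j e.2 -> entry_valid (data s') e.1 j e.2)
             \/ helper s' j x') ->
  (forall k t', t' <> t -> owner k (TH ts t') -> lwl s' k = lwl s k) ->
  (forall j i, j < n -> stat s j = (i, EXECUTED) -> stat s' j = stat s j -> lrs s' j = lrs s j ->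
     helper s j (TH ts t) -> helper s' j x' \/ good s' j \/ vidx s' <= j) ->
  forall j i, j < n -> stat s' j = (i, EXECUTED) ->
    good s' j \/ vidx s' <= j \/ exists t', helper s' j (TH (set_nth (Loop None) ts t x') t').
Proof.
move=> I Hv HS HD HL HT j i Hj Hs.
have Hx : helper s' j x' -> good s' j \/ vidx s' <= j \/
    exists t', helper s' j (TH (set_nth (Loop None) ts t x') t').
  by move=> H; right; right; exists t; rewrite nth_set eqxx.
case: (HS j i Hj Hs) => [[Hs0 Hr]|]; last exact: Hx.
case: (HD j) => [Hd|]; last exact: Hx.
case: (iV I Hj Hs0) => [G|[G|[t' G]]].
- by left; apply: good_frame G Hr Hd.
- by right; left; apply: leq_trans Hv G.
case: (t' =P t) => [E|N].
  subst t'; case: (HT j i Hj Hs0 (etrans Hs (esym Hs0)) Hr G) => [H|[H|H]].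
  + exact: Hx.
  + by left.
  + by right; left.
right; right; exists t'; rewrite nth_set; case: eqP => // _.
apply: helper_frame G _ Hr Hd _; first by rewrite Hs Hs0.
by move=> k O; apply: HL O.
Qed.

Lemma Inv_build s' (ts : seq tstate) W' t x' :
  (forall k i, stat s' k = (i, READY) -> clean s' k /\ W' k i = None) ->
  (forall k i, stat s' k = (i, EXECUTED) -> recorded s' W' k i) ->
  (forall k i, (stat s' k).1 < i -> W' k i = None) ->
  (forall p k i v, data s' p k = Some (EVal i v) -> valof init W' p (Some (k, i)) = Some v) ->
  (forall p k, n <= k -> data s' p k = None) ->
  (forall k, uniq (lwl s' k)) ->
  TInv s' W' x' -> (forall t', t' <> t -> TInv s' W' (TH ts t')) ->
  (forall k t1 t2, t1 <> t2 -> owner k (TH (set_nth (Loop None) ts t x') t1) ->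
    owner k (TH (set_nth (Loop None) ts t x') t2) -> False) ->
  (forall b d, d \in deps s' b -> LF s' W' d) ->
  (forall b, uniq (deps s' b)) ->
  (forall b b' d, d \in deps s' b -> d \in deps s' b' -> b = b') ->
  (forall t1 t2 d, t1 <> t2 -> d \in f2rest (TH (set_nth (Loop None) ts t x') t1) ->
    d \in f2rest (TH (set_nth (Loop None) ts t x') t2) -> False) ->
  (forall j i, j < n -> stat s' j = (i, EXECUTED) ->
    good s' j \/ vidx s' <= j \/ exists t', helper s' j (TH (set_nth (Loop None) ts t x') t')) ->
  Inv s' (set_nth (Loop None) ts t x') W'.
Proof.
move=> H1 H2 H3 H4 H5 H6 H7 H8 *; split => //.
by move=> t'; rewrite nth_set; case: eqP => [_|N] //; apply: H8.
Qed.

End Inv.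


Section Step.
Variables (Loc : eqType) (Val : Type) (init : Loc -> Val) (txs : seq (prog Loc Val)).
Local Notation n := (size txs).
Local Notation tx k := (nth Ret txs k).
Local Notation shared := (shared Loc Val).
Local Notation tstate := (tstate Loc Val).
Local Notation wset := (wset Loc Val).
Local Notation EST := (Some (@Est Val)).
Local Notation Pre := (Pre init).
Local Notation ghost := (ghost Loc Val).
Local Notation TH ts t := (nth (Loop None) ts t).
Local Notation Inv := (Inv init txs).
Local Notation TInv := (TInv init txs).

Ltac loc W s := exists W; (apply: (@Inv_irrel _ _ init txs s); [done..|]);
  apply: Inv_local => //.

Lemma case_done s ts W t ot : Inv s ts W -> TH ts t = Loop ot ->
  exists W', Inv s (set_nth (Loop None) ts t (Joined ot)) W'.
Proof.
move=> I Ex; have HT := iThr I t; rewrite Ex in HT.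
exists W; apply: Inv_local => //; rewrite ?Ex; case: ot {Ex} HT => [[k i|k i]|] //=.
by move=> _ *; left.
Qed.

Lemma case_task s ts W t tk : Inv s ts W -> TH ts t = Loop (Some tk) ->
  exists W', Inv s (set_nth (Loop None) ts t (start txs tk)) W'.
Proof.
move=> I Ex; have HT := iThr I t; rewrite Ex in HT.
exists W; apply: Inv_local => //; rewrite ?Ex; case: tk {Ex} HT => [k i|k i] //=.
- by case=> [? [? [? ?]]]; do !split => //; apply: P0.
- by move=> _ *; left.
Qed.

Lemma Inv_vinc s ts W t : Inv s ts W -> TH ts t = NV_C (vidx s) ->
  Inv (set_vidx s (vidx s).+1) ts W.
Proof.
move=> I Ex; case: (I) => H1 H2 H3 H4 H5 H6 H7 H8 H9 H10 H11 H12 H13; split => //.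
move=> j i Hj Hs; case: (H13 j i Hj Hs) => [G|[G|G]]; [by left| |by right; right].
case: (vidx s =P j) => [E|N].
  by right; right; exists t; rewrite Ex /=.
by right; left => /=; rewrite ltn_neqAle G andbT; apply/eqP.
Qed.

Lemma case_NV_F s ts W t : Inv s ts W -> TH ts t = NV_F ->
  exists W', Inv (set_vidx s (vidx s).+1) (set_nth (Loop None) ts t (NV_C (vidx s))) W'.
Proof.
move=> I Ex; exists W; apply: (Inv_vinc (t:=t)); last by rewrite nth_set eqxx.
by apply: Inv_local => //; rewrite Ex.
Qed.

Lemma case_NV_C s ts W t k : Inv s ts W -> TH ts t = NV_C k ->
  exists W', Inv s (set_nth (Loop None) ts t
    (if (k < n) && is_executed (stat s k).2 then Loop (Some (TVal k (stat s k).1)) else NV_D k)) W'.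
Proof.
move=> I Ex; exists W; case E: (_ && _); apply: Inv_local => //; rewrite ?Ex //=.
- by move=> j i Hj Hs <-; left.
- by move=> j i Hj Hs E'; subst; rewrite Hj Hs in E.
Qed.

Lemma agree_stat (s : shared) (W : ghost) (f : nat -> nat * tstat) k : f k = stat s k -> agree s (set_stat s f) W W k.
Proof. by move=> E; split. Qed.

Lemma stat_ready (s : shared) k : is_ready (stat s k).2 -> stat s k = ((stat s k).1, READY).
Proof. by case: (stat s k) => i []. Qed.

Lemma stat_exec (s : shared) k : is_executed (stat s k).2 -> stat s k = ((stat s k).1, EXECUTED).
Proof. by case: (stat s k) => i []. Qed.

Lemma case_TI_ok s ts W t k vo : Inv s ts W -> TH ts t = TI k vo -> k < n -> is_ready (stat s k).2 ->
  exists W', Inv (set_stat s (upd (stat s) k ((stat s k).1, EXECUTING)))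
    (set_nth (Loop None) ts t (Loop (Some (TExec k (stat s k).1)))) W'.
Proof.
move=> I Ex Hk /stat_ready Hr; set i := (stat s k).1 in Hr *.
set s' := set_stat _ _.
have Ag k' : k' != k -> agree s s' W W k'.
  by move=> N; apply: agree_stat; rewrite /upd (negbTE N).
have Sk : stat s' k = (i, EXECUTING) by rewrite /= /upd eqxx.
have [Rc Rw] := iReady I Hr.
exists W; apply: Inv_build.
- move=> k' i'; case: (k' =P k) => [->|/eqP N]; first by rewrite Sk.
  case: (Ag k' N) => -> _ _ _ _ /(iReady I) [? ?]; split => //; exact: clean_agree (Ag k' N) _.
- move=> k' i'; case: (k' =P k) => [->|/eqP N]; first by rewrite Sk.
  case: (Ag k' N) => -> _ _ _ _ /(iExec I) R; exact: recorded_agree (Ag k' N) R.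
- move=> k' i'; case: (k' =P k) => [->|/eqP N]; first by rewrite Sk; apply: (iGhost I); rewrite Hr.
  by case: (Ag k' N) => -> _ _ _ _; apply: (iGhost I).
- exact: (iData I).
- exact: (iHigh I).
- exact: (iLwl I).
- by rewrite /TInv; do !split => //; exact: Rc.
- apply: (other_thr (s:=s) (k0 := k) I) => //.
  + by move=> b d ->; left.
  + by right; left; exists i.
- apply: (iOwn_gen I) => // k' /= /eqP <-; right; left; by exists i.
- move=> b d /(iDeps I) L; apply: (LF_agree _ L); apply: Ag; apply/eqP => E; subst.
  by case: L => i' [E' _]; rewrite Hr in E'.
- exact: (iDepsU I).
- exact: (iDepsD I).
- by apply: (iF2_gen I).
- apply: (iV_gen I) => //.
  + move=> j i' Hj; case: (j =P k) => [->|/eqP N]; first by rewrite Sk.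
    by case: (Ag j N) => -> _ _ -> _ Hs; left.
  + by move=> j; left.
  + by rewrite Ex.
Qed.

Lemma case_Ex_wr s ts W t k i p v c ws rs : Inv s ts W -> TH ts t = ExRun k i (Wr p v c) ws rs ->
  exists W', Inv s (set_nth (Loop None) ts t (ExRun k i c (ws_upd ws p v) rs)) W'.
Proof.
move=> I Ex; have HT := iThr I t; rewrite Ex in HT.
exists W; apply: Inv_local => //; rewrite ?Ex //=.
by case: HT => [? [? [? [? HP]]]]; do !split => //; apply: PWr.
Qed.

Lemma case_Ex_rdl s ts W t k i p c ws rs v : Inv s ts W -> TH ts t = ExRun k i (Rd p c) ws rs ->
  ws_get ws p = Some v ->
  exists W', Inv s (set_nth (Loop None) ts t (ExRun k i (c v) ws rs)) W'.
Proof.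
move=> I Ex E; have HT := iThr I t; rewrite Ex in HT.
exists W; apply: Inv_local => //; rewrite ?Ex //=.
by case: HT => [? [? [? [? HP]]]]; do !split => //; apply: PRdL HP E.
Qed.

Lemma case_Ex_rdm s ts W t k i p c ws rs : Inv s ts W -> TH ts t = ExRun k i (Rd p c) ws rs ->
  ws_get ws p = None ->
  exists W', Inv s (set_nth (Loop None) ts t
      match mvread (data s) p k with
       | RNotFound => ExRun k i (c (init p)) ws (rcons rs (p, None))
       | ROk j i' v => ExRun k i (c v) ws (rcons rs (p, Some (j, i')))
       | RErr b => ExDep k i b
       end) W'.
Proof.
move=> I Ex E; have HT := iThr I t; rewrite Ex in HT.
case: HT => [Hk [Hs [Hc [Hw HP]]]].
exists W; case M: (mvread _ _ _) => [|j i' v|b]; apply: Inv_local => //; rewrite ?Ex //=.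
- by do !split => //; apply: PRdM HP E _.
- do !split => //; apply: PRdM HP E _.
  exact: (iData I) (mvread_ROk M).
Qed.

Lemma recorded_mono (s : shared) (W W' : ghost) k i : ghost_le W W' -> recorded init txs s W k i -> recorded init txs s W' k i.
Proof.
move=> le [Hk [ws [Hw [Hl [Hd Hp]]]]]; split => //; exists ws; do !split => //; first exact: le.
exact: Pre_mono le Hp.
Qed.

Lemma LF_mono (s : shared) (W W' : ghost) d : ghost_le W W' -> (forall i, W' d i = W d i) -> LF s W d -> LF s W' d.
Proof. by move=> le E [i [H1 [H2 H3]]]; exists i; rewrite E. Qed.

Definition gupd (W : ghost) k i ws : ghost :=
  fun k' i' => if (k' == k) && (i' == i) then Some ws else W k' i'.

Lemma gupd_le (W : ghost) k i ws : W k i = None -> ghost_le W (gupd W k i ws).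
Proof.
move=> H k' i' ws' E; rewrite /gupd; case: (k' =P k) => //= ?; case: (i' =P i) => //= ?.
by subst; rewrite H in E.
Qed.

Lemma case_Ex_ret s ts W t k i ws rs : Inv s ts W -> TH ts t = ExRun k i Ret ws rs ->
  exists W', Inv s (set_nth (Loop None) ts t (RecW k i ws rs ws)) W'.
Proof.
move=> I Ex; have HT := iThr I t; rewrite Ex in HT.
case: HT => [Hk [Hs [Hc [Hw HP]]]].
set W' := gupd W k i ws; have le : ghost_le W W' by apply: gupd_le.
have Wo k' i' : k' != k -> W' k' i' = W k' i'.
  by move=> N; rewrite /W' /gupd (negbTE N).
have Ag k' : k' != k -> agree s s W W' k' by move=> N; split => // i'; apply: Wo.
exists W'; apply: Inv_build.
- move=> k' i' Hr; have [? ?] := iReady I Hr; split => //.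
  by rewrite Wo //; apply/eqP => E; subst; rewrite Hs in Hr.
- by move=> k' i' /(iExec I) R; apply: recorded_mono le R.
- move=> k' i' Hl; rewrite /W' /gupd; case: (k' =P k) => [E|_] /=; last exact: (iGhost I).
  subst; case: (i' =P i) => [E|_]; last exact: (iGhost I).
  by subst; rewrite Hs ltnn in Hl.
- by move=> p k' i' v /(iData I) /(valof_mono le).
- exact: (iHigh I).
- exact: (iLwl I).
- rewrite /=; do !split => //.
  + by rewrite /W' /gupd !eqxx.
  + exact: Pre_mono le HP.
  + exact: Pre_uniq HP.
  + by move=> p; rewrite andbN; apply: Hc.
- apply: (other_thr (s:=s) (k0 := k) I) => //; last by left; rewrite Ex /=.
  by move=> b d ->; left.
- apply: (iOwn_gen I) => // k' /= /eqP <-; left; by rewrite Ex /=.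
- move=> b d /(iDeps I) L; apply: (LF_agree _ L); apply: Ag; apply/eqP => E; subst.
  by case: L => i' [E' _]; rewrite Hs in E'.
- exact: (iDepsU I).
- exact: (iDepsD I).
- by apply: (iF2_gen I).
- apply: (iV_gen I) => //.
  + by move=> j i' Hj Hs'; left.
  + by move=> j; left.
  + by rewrite Ex.
Qed.

Lemma case_ExDep_retry s ts W t k i b : Inv s ts W -> TH ts t = ExDep k i b ->
  exists W', Inv s (set_nth (Loop None) ts t (ExRun k i (tx k) [::] [::])) W'.
Proof.
move=> I Ex; have HT := iThr I t; rewrite Ex in HT.
exists W; apply: Inv_local => //; rewrite ?Ex //=.
by case: HT => [? [? [? ?]]]; do !split => //; apply: P0.
Qed.

Lemma owner_notdeps s ts W t k : Inv s ts W -> owner k (TH ts t) -> forall b, k \notin deps s b.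
Proof.
move=> I O b; apply/negP => /(iDeps I) L; exact: owner_notLF (iThr I t) O L.
Qed.

Lemma case_ExDep_abort s ts W t k i b : Inv s ts W -> TH ts t = ExDep k i b ->
  exists W', Inv (set_deps (set_stat s (upd (stat s) k ((stat s k).1, ABORTING)))
                (upd (deps s) b (if k \in deps s b then deps s b else k :: deps s b)))
     (set_nth (Loop None) ts t ExDepDec) W'.
Proof.
move=> I Ex; have HT := iThr I t; rewrite Ex in HT.
case: HT => [Hk [Hs [Hc Hw]]].
have ND : forall b, k \notin deps s b by apply: (owner_notdeps (t:=t) I); rewrite Ex /=.
set s' := set_deps _ _.
have Ds b' : deps s' b' = if b' == b then k :: deps s b else deps s b'.
  by rewrite /= /upd (negbTE (ND b)).
have Ag k' : k' != k -> agree s s' W W k'.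
  by move=> N; split => //=; rewrite /upd (negbTE N).
have Sk : stat s' k = (i, ABORTING) by rewrite /= /upd eqxx Hs.
exists W; apply: Inv_build.
- move=> k' i'; case: (k' =P k) => [->|/eqP N]; first by rewrite Sk.
  case: (Ag k' N) => -> _ _ _ _ /(iReady I) [? ?]; split => //; exact: clean_agree (Ag k' N) _.
- move=> k' i'; case: (k' =P k) => [->|/eqP N]; first by rewrite Sk.
  case: (Ag k' N) => -> _ _ _ _ /(iExec I) R; exact: recorded_agree (Ag k' N) R.
- move=> k' i'; case: (k' =P k) => [->|/eqP N]; first by rewrite Sk => H; apply: (iGhost I); rewrite Hs.
  by case: (Ag k' N) => -> _ _ _ _; apply: (iGhost I).
- exact: (iData I).
- exact: (iHigh I).
- exact: (iLwl I).
- by [].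
- apply: (other_thr (s:=s) (k0 := k) I) => //; last by left; rewrite Ex /=.
  move=> b' d; rewrite Ds; case: (b' =P b) => [->|_] //; last by left.
  by rewrite in_cons => /orP [/eqP ->|]; [right|left].
- by apply: (iOwn_gen I).
- move=> b' d; rewrite Ds; have G : d \in deps s b' -> LF s' W d.
    move=> /(iDeps I) L; apply: (LF_agree _ L); apply: Ag; apply/eqP => E; subst.
    by case: L => i' [E' _]; rewrite Hs in E'.
  case: (b' =P b) => [E|_] /=; last exact: G.
  subst b'; rewrite in_cons => /orP [/eqP ->|/G //]; exists i; do !split => //.
- move=> b'; rewrite Ds; case: eqP => _ /=; last exact: (iDepsU I).
  by rewrite ND (iDepsU I).
- move=> b1 b2 d; rewrite !Ds.
  case: (b1 =P b) => [E1|_]; case: (b2 =P b) => [E2|_] /=; try by subst.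
  + rewrite in_cons; case/orP => [/eqP ->|H1] H2; first by rewrite (negbTE (ND b2)) in H2.
    by rewrite E1; apply: (iDepsD I) H1 H2.
  + rewrite in_cons => H1 /orP [/eqP E|H2]; first by subst; rewrite (negbTE (ND b1)) in H1.
    by rewrite E2; apply: (iDepsD I) H1 H2.
  + exact: (iDepsD I).
- by apply: (iF2_gen I).
- apply: (iV_gen I) => //.
  + move=> j i' Hj; case: (j =P k) => [->|/eqP N]; first by rewrite Sk.
    by case: (Ag j N) => -> _ _ -> _ Hs'; left.
  + by move=> j; left.
  + by rewrite Ex.
Qed.

Lemma gReady s s' ts W k : Inv s ts W -> (forall k', k' != k -> agree s s' W W k') ->
  stat s' k = stat s k -> ~~ is_ready (stat s k).2 ->
  forall k' i, stat s' k' = (i, READY) -> clean s' k' /\ W k' i = None.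
Proof.
move=> I Ag Sk NR k' i; case: (k' =P k) => [->|/eqP N].
  by rewrite Sk => E; rewrite E in NR.
case: (Ag k' N) => -> _ _ _ _ /(iReady I) [? ?]; split => //; exact: clean_agree (Ag k' N) _.
Qed.

Lemma gExec s s' ts W k : Inv s ts W -> (forall k', k' != k -> agree s s' W W k') ->
  stat s' k = stat s k -> ~~ is_executed (stat s k).2 ->
  forall k' i, stat s' k' = (i, EXECUTED) -> recorded init txs s' W k' i.
Proof.
move=> I Ag Sk NR k' i; case: (k' =P k) => [->|/eqP N].
  by rewrite Sk => E; rewrite E in NR.
case: (Ag k' N) => -> _ _ _ _ /(iExec I) R; exact: recorded_agree (Ag k' N) R.
Qed.

Lemma gGhost s s' ts W k : Inv s ts W -> (forall k', k' != k -> agree s s' W W k') ->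
  (stat s' k).1 = (stat s k).1 ->
  forall k' i, (stat s' k').1 < i -> W k' i = None.
Proof.
move=> I Ag Sk k' i; case: (k' =P k) => [->|/eqP N]; first by rewrite Sk; apply: (iGhost I).
by case: (Ag k' N) => -> _ _ _ _; apply: (iGhost I).
Qed.

Lemma gDeps s s' ts W t k : Inv s ts W -> (forall k', k' != k -> agree s s' W W k') ->
  owner k (TH ts t) -> (forall b, deps s' b = deps s b) ->
  forall b d, d \in deps s' b -> LF s' W d.
Proof.
move=> I Ag O D b d; rewrite D => /(iDeps I) L; apply: (LF_agree _ L); apply: Ag.
by apply/eqP => E; subst; apply: owner_notLF (iThr I t) O L.
Qed.

Lemma uniq_rm (T : eqType) (pre post : seq T) x : uniq (pre ++ x :: post) -> uniq (pre ++ post).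
Proof.
rewrite !cat_uniq /= => /and3P [-> /norP [_ ->] /andP [_ ->]] //.
Qed.

Lemma mem_rm (T : eqType) (pre post : seq T) x y : y != x ->
  (y \in pre ++ x :: post) = (y \in pre ++ post).
Proof. by move=> N; rewrite !mem_cat in_cons (negbTE N). Qed.

Lemma notin_rm (T : eqType) (pre post : seq T) x : uniq (pre ++ x :: post) -> x \notin pre ++ post.
Proof.
rewrite cat_uniq /= mem_cat => /and3P [_ /norP [H1 _] /andP [H2 _]]; apply/norP; split => //.
Qed.

Lemma In_rm (T : Type) (pre post : seq T) x e : In e (pre ++ post) -> In e (pre ++ x :: post).
Proof.
move=> H; apply List.in_or_app; case: (List.in_app_or _ _ _ H) => ?; [by left|by right; right].
Qed.

Lemma In_mid (T : Type) (pre post : seq T) x : In x (pre ++ x :: post).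
Proof. by apply List.in_or_app; right; left. Qed.

Lemma case_RecW s ts W t k i ws rs pre post p v : Inv s ts W ->
  TH ts t = RecW k i ws rs (pre ++ (p, v) :: post) ->
  exists W', Inv (set_data s (upd_data (data s) p k (Some (EVal i v))))
     (set_nth (Loop None) ts t (RecW k i ws rs (pre ++ post))) W'.
Proof.
move=> I Ex; have HT := iThr I t; rewrite Ex in HT.
case: HT => [Hk [Hs [Hw [HP [Hu [Hin Hd]]]]]].
have Uws := Pre_uniq HP.
have Gp : ws_get ws p = Some v by apply: ws_get_mem Uws (Hin _ (In_mid _ _ _)).
have Pw : p \in map fst ws by apply: ws_get_some Gp.
have Pr : p \notin map fst (pre ++ post).
  by move: Hu; rewrite !map_cat /= => /notin_rm.
set s' := set_data _ _.
have Ag k' : k' != k -> agree s s' W W k'.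
  by move=> N; split => //= p'; rewrite /upd_data (negbTE N) andbF.
have Own : owner k (TH ts t) by rewrite Ex /=.
exists W; apply: Inv_build.
- by apply: (gReady I Ag) => //; rewrite Hs.
- by apply: (gExec I Ag) => //; rewrite Hs.
- exact: (gGhost I Ag).
- move=> p' k' i' v'; rewrite /= /upd_data; case: ifP => [/andP [/eqP E1 /eqP E2]|_].
    by case=> <- <-; subst; rewrite /= Hw /= Gp.
  exact: (iData I).
- by move=> p' k' H; rewrite /= /upd_data; case: ifP => [/andP [_ /eqP E]|_];
    [subst; rewrite leqNgt Hk in H| apply: (iHigh I)].
- exact: (iLwl I).
- rewrite /=; do !split => //.
  + by move: Hu; rewrite !map_cat /=; apply: uniq_rm.
  + by move=> e He; apply: Hin; apply: In_rm.
  + move=> p'; rewrite /upd_data; case: (p' =P p) => [->|/eqP N] /=.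
      by rewrite eqxx Pw Pr /= Gp.
    by rewrite Hd !map_cat /= (mem_rm _ _ N).
- apply: (other_thr (s:=s) (k0 := k) I) => //; last by left.
  by move=> b d ->; left.
- by apply: (iOwn_gen I) => // k' /= /eqP <-; left.
- by apply: (gDeps I Ag Own).
- exact: (iDepsU I).
- exact: (iDepsD I).
- by apply: (iF2_gen I).
- apply: (iV_gen I) => //.
  + move=> j i' Hj; case: (j =P k) => [->|/eqP N]; first by rewrite /= Hs.
    by case: (Ag j N) => -> _ _ -> _ Hs'; left.
  + move=> j; have [Hkj|Hjk] := ltnP k j; last by left=> e; rewrite valid_upd_high.
    case L: (p \in lwl s k).
      left=> e; apply: valid_upd_est; move: (Hd p); rewrite Pw /= !map_cat /=.
      by rewrite mem_cat in_cons eqxx orbT /= L.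
    by right; split => //; apply/hasP; exists p => //=; rewrite L.
  + by rewrite Ex => j i' _ _ _ _ H; left.
Qed.

Lemma ws_get_notin (ws : wset) p : p \notin map fst ws -> ws_get ws p = None.
Proof. by rewrite -ws_get_in; case: (ws_get ws p). Qed.

Lemma case_RecW_done s ts W t k i ws rs : Inv s ts W -> TH ts t = RecW k i ws rs [::] ->
  exists W', Inv s (set_nth (Loop None) ts t (RecL k i ws rs)) W'.
Proof.
move=> I Ex; have HT := iThr I t; rewrite Ex in HT.
exists W; apply: Inv_local => //; rewrite ?Ex //=.
- case: HT => [? [? [? [? [_ [_ Hd]]]]]]; do !split => //; move=> p; rewrite Hd /= andbT //.
- by move=> *; left.
Qed.

Lemma case_RecL s ts W t k i ws rs : Inv s ts W -> TH ts t = RecL k i ws rs ->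
  exists W', Inv s (set_nth (Loop None) ts t
     (RecR k i ws rs (lwl s k) [seq q <- lwl s k | q \notin map fst ws])) W'.
Proof.
move=> I Ex; have HT := iThr I t; rewrite Ex in HT.
exists W; apply: Inv_local => //; rewrite ?Ex //=.
- case: HT => [? [? [? [? Hd]]]]; do !split => //.
  + by rewrite filter_uniq // (iLwl I).
  + by move=> q; rewrite mem_filter => /andP [].
  + move=> p; rewrite Hd mem_filter; case: (p \in map fst ws) => //=.
- by move=> *; left.
Qed.

Lemma case_RecR_done s ts W t k i ws rs prev : Inv s ts W -> TH ts t = RecR k i ws rs prev [::] ->
  exists W', Inv s (set_nth (Loop None) ts t (RecSL k i ws rs prev)) W'.
Proof.
move=> I Ex; have HT := iThr I t; rewrite Ex in HT.
exists W; apply: Inv_local => //; rewrite ?Ex //=.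
- case: HT => [? [? [? [? [? [_ [_ Hd]]]]]]]; do !split => //; move=> p; rewrite Hd.
  by case: ifP => // /negbT /ws_get_notin ->.
- by move=> *; left.
Qed.

Lemma case_RecR s ts W t k i ws rs prev pre post q : Inv s ts W ->
  TH ts t = RecR k i ws rs prev (pre ++ q :: post) ->
  exists W', Inv (set_data s (upd_data (data s) q k None))
     (set_nth (Loop None) ts t (RecR k i ws rs prev (pre ++ post))) W'.
Proof.
move=> I Ex; have HT := iThr I t; rewrite Ex in HT.
case: HT => [Hk [Hs [Hw [HP [Hpr [Hu [Hq Hd]]]]]]].
have Qw : q \notin map fst ws by apply: Hq; rewrite mem_cat in_cons eqxx orbT.
have Qe : data s q k = EST by rewrite Hd (negbTE Qw) mem_cat in_cons eqxx orbT.
set s' := set_data _ _.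
have Ag k' : k' != k -> agree s s' W W k'.
  by move=> N; split => //= p'; rewrite /upd_data (negbTE N) andbF.
have Own : owner k (TH ts t) by rewrite Ex /=.
exists W; apply: Inv_build.
- by apply: (gReady I Ag) => //; rewrite Hs.
- by apply: (gExec I Ag) => //; rewrite Hs.
- exact: (gGhost I Ag).
- move=> p' k' i' v'; rewrite /= /upd_data; case: ifP => // _; exact: (iData I).
- by move=> p' k' H; rewrite /= /upd_data; case: ifP => // _; apply: (iHigh I).
- exact: (iLwl I).
- rewrite /=; do !split => //.
  + exact: uniq_rm Hu.
  + by move=> q' Hq'; apply: Hq; rewrite mem_cat in_cons; move: Hq'; rewrite mem_cat => /orP [->|->]; rewrite ?orbT.
  + move=> p'; rewrite /upd_data; case: (p' =P q) => [->|/eqP N] /=.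
      by rewrite eqxx (negbTE Qw) (negbTE (notin_rm Hu)).
    by rewrite Hd (mem_rm _ _ N).
- apply: (other_thr (s:=s) (k0 := k) I) => //; last by left.
  by move=> b d ->; left.
- by apply: (iOwn_gen I) => // k' /= /eqP <-; left.
- by apply: (gDeps I Ag Own).
- exact: (iDepsU I).
- exact: (iDepsD I).
- by apply: (iF2_gen I).
- apply: (iV_gen I) => //.
  + move=> j i' Hj; case: (j =P k) => [->|/eqP N]; first by rewrite /= Hs.
    by case: (Ag j N) => -> _ _ -> _ Hs'; left.
  + by move=> j; left=> e; apply: valid_upd_est.
  + by rewrite Ex => j i' _ _ _ _ H; left.
Qed.

Lemma case_RecSL s ts W t k i ws rs prev : Inv s ts W -> TH ts t = RecSL k i ws rs prev ->
  exists W', Inv (set_lwl s (upd (lwl s) k (map fst ws)))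
     (set_nth (Loop None) ts t (RecSR k i rs (has (fun q => q \notin prev) (map fst ws)))) W'.
Proof.
move=> I Ex; have HT := iThr I t; rewrite Ex in HT.
case: HT => [Hk [Hs [Hw [HP [Hpr Hd]]]]].
set s' := set_lwl _ _.
have Ag k' : k' != k -> agree s s' W W k'.
  by move=> N; split => //=; rewrite /upd (negbTE N).
have Own : owner k (TH ts t) by rewrite Ex /=.
have Lk : lwl s' k = map fst ws by rewrite /= /upd eqxx.
exists W; apply: Inv_build.
- by apply: (gReady I Ag) => //; rewrite Hs.
- by apply: (gExec I Ag) => //; rewrite Hs.
- exact: (gGhost I Ag).
- exact: (iData I).
- exact: (iHigh I).
- move=> k'; rewrite /= /upd; case: ifP => _; [exact: Pre_uniq HP | exact: (iLwl I)].
- by rewrite /=; do !split => //; exists ws; do !split => //.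
- apply: (other_thr (s:=s) (k0 := k) I) => //; last by left.
  by move=> b d ->; left.
- by apply: (iOwn_gen I) => // k' /= /eqP <-; left.
- by apply: (gDeps I Ag Own).
- exact: (iDepsU I).
- exact: (iDepsD I).
- by apply: (iF2_gen I).
- apply: (iV_gen I) => //.
  + move=> j i' Hj; case: (j =P k) => [->|/eqP N]; first by rewrite /= Hs.
    by case: (Ag j N) => -> _ _ -> _ Hs'; left.
  + by move=> j; left.
  + move=> k' t' N O; case: (Ag k' _) => // ; apply/eqP => E; subst.
    exact: (iOwn I) N O Own.
  + by rewrite Ex => j i' _ _ _ _ H; left.
Qed.

Lemma case_RecSR s ts W t k i rs w : Inv s ts W -> TH ts t = RecSR k i rs w ->
  exists W', Inv (set_lrs s (upd (lrs s) k rs)) (set_nth (Loop None) ts t (Fin0 k i w)) W'.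
Proof.
move=> I Ex; have HT := iThr I t; rewrite Ex in HT.
case: HT => [Hk [Hs [ws [Hw [HP [Hl Hd]]]]]].
set s' := set_lrs _ _.
have Ag k' : k' != k -> agree s s' W W k'.
  by move=> N; split => //=; rewrite /upd (negbTE N).
have Own : owner k (TH ts t) by rewrite Ex /=.
exists W; apply: Inv_build.
- by apply: (gReady I Ag) => //; rewrite Hs.
- by apply: (gExec I Ag) => //; rewrite Hs.
- exact: (gGhost I Ag).
- exact: (iData I).
- exact: (iHigh I).
- exact: (iLwl I).
- by rewrite /=; do !split => //; exists ws; do !split => //; rewrite /= /upd eqxx.
- apply: (other_thr (s:=s) (k0 := k) I) => //; last by left.
  by move=> b d ->; left.
- by apply: (iOwn_gen I) => // k' /= /eqP <-; left.
- by apply: (gDeps I Ag Own).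
- exact: (iDepsU I).
- exact: (iDepsD I).
- by apply: (iF2_gen I).
- apply: (iV_gen I) => //.
  + move=> j i' Hj; case: (j =P k) => [->|/eqP N]; first by rewrite /= Hs.
    by case: (Ag j N) => -> _ _ -> _ Hs'; left.
  + by move=> j; left.
  + by rewrite Ex => j i' _ _ _ _ H; left.
Qed.

Lemma case_Fin0 s ts W t k i w : Inv s ts W -> TH ts t = Fin0 k i w ->
  exists W', Inv (set_stat s (upd (stat s) k ((stat s k).1, EXECUTED)))
     (set_nth (Loop None) ts t (Fin1 k i w)) W'.
Proof.
move=> I Ex; have HT := iThr I t; rewrite Ex in HT.
case: HT => [Hk [Hs Hr]].
set s' := set_stat _ _.
have Ag k' : k' != k -> agree s s' W W k'.
  by move=> N; apply: agree_stat; rewrite /upd (negbTE N).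
have Sk : stat s' k = (i, EXECUTED) by rewrite /= /upd eqxx Hs.
have Own : owner k (TH ts t) by rewrite Ex /=.
exists W; apply: Inv_build.
- move=> k' i'; case: (k' =P k) => [->|/eqP N]; first by rewrite Sk.
  case: (Ag k' N) => -> _ _ _ _ /(iReady I) [? ?]; split => //; exact: clean_agree (Ag k' N) _.
- move=> k' i'; case: (k' =P k) => [->|/eqP N]; first by rewrite Sk; case=> <-.
  case: (Ag k' N) => -> _ _ _ _ /(iExec I) R; exact: recorded_agree (Ag k' N) R.
- by apply: (gGhost I Ag); rewrite Sk Hs.
- exact: (iData I).
- exact: (iHigh I).
- exact: (iLwl I).
- by [].
- apply: (other_thr (s:=s) (k0 := k) I) => //; last by left.
  by move=> b d ->; left.
- by apply: (iOwn_gen I).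
- by apply: (gDeps I Ag Own).
- exact: (iDepsU I).
- exact: (iDepsD I).
- by apply: (iF2_gen I).
- apply: (iV_gen I) => //.
  + move=> j i' Hj; case: (j =P k) => [->|/eqP N].
      by rewrite Sk => -[<-]; right; left; rewrite Sk.
    by case: (Ag j N) => -> _ _ -> _ Hs'; left.
  + by move=> j; left.
  + by rewrite Ex => j i' _ _ _ _ H; left; right.
Qed.

Lemma case_Fin1 s ts W t k i w : Inv s ts W -> TH ts t = Fin1 k i w ->
  exists W', Inv (set_deps s (upd (deps s) k [::]))
     (set_nth (Loop None) ts t (Fin2 k i w (deps s k) (deps s k))) W'.
Proof.
move=> I Ex.
set s' := set_deps _ _.
have Ag k' : agree s s' W W k' by [].
have Dsub b d : d \in deps s' b -> d \in deps s b.
  by rewrite /= /upd; case: ifP.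
exists W; apply: Inv_build.
- exact: (iReady I).
- exact: (iExec I).
- exact: (iGhost I).
- exact: (iData I).
- exact: (iHigh I).
- exact: (iLwl I).
- rewrite /=; split; first exact: (iDepsU I).
  move=> d Hd; split; first exact: (iDeps I) Hd.
  move=> b; rewrite /upd; case: (b =P k) => // N; apply/negP => H.
  by apply: N; apply: (iDepsD I) H Hd.
- move=> t' _; apply: (other_thr_all (s:=s) I) => //.
- by apply: (iOwn_gen I).
- by move=> b d /Dsub /(iDeps I).
- by move=> b; rewrite /= /upd; case: ifP => // _; apply: (iDepsU I).
- by move=> b b' d /Dsub H /Dsub; apply: (iDepsD I).
- apply: (iF2_gen I) => d /= Hd; right; by exists k.
- apply: (iV_gen I) => //.
  + by move=> j i' Hj Hs'; left.
  + by move=> j; left.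
  + by rewrite Ex => j i' _ _ _ _ H; left.
Qed.

Lemma case_Fin2 s ts W t k i w ds pre post d : Inv s ts W -> TH ts t = Fin2 k i w ds (pre ++ d :: post) ->
  exists W', Inv (set_stat s (upd (stat s) d ((stat s d).1.+1, READY)))
     (set_nth (Loop None) ts t (Fin2 k i w ds (pre ++ post))) W'.
Proof.
move=> I Ex; have HT := iThr I t; rewrite Ex in HT.
case: HT => [Hu HL].
have Hdin : d \in pre ++ d :: post by rewrite mem_cat in_cons eqxx orbT.
case: (HL d Hdin) => [[id [Hs [Hc Hw]]] ND].
set s' := set_stat _ _.
have Ag k' : k' != d -> agree s s' W W k'.
  by move=> N; apply: agree_stat; rewrite /upd (negbTE N).
have Sd : stat s' d = (id.+1, READY) by rewrite /= /upd eqxx Hs.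
exists W; apply: Inv_build.
- move=> k' i'; case: (k' =P d) => [->|/eqP N].
    rewrite Sd => -[<-]; split => //; apply: (iGhost I); by rewrite Hs.
  case: (Ag k' N) => -> _ _ _ _ /(iReady I) [? ?]; split => //; exact: clean_agree (Ag k' N) _.
- move=> k' i'; case: (k' =P d) => [->|/eqP N]; first by rewrite Sd.
  case: (Ag k' N) => -> _ _ _ _ /(iExec I) R; exact: recorded_agree (Ag k' N) R.
- move=> k' i'; case: (k' =P d) => [->|/eqP N].
    rewrite Sd => H; apply: (iGhost I); rewrite Hs; exact: ltnW.
  by case: (Ag k' N) => -> _ _ _ _; apply: (iGhost I).
- exact: (iData I).
- exact: (iHigh I).
- exact: (iLwl I).
- rewrite /=; split; first exact: uniq_rm Hu.
  move=> d' Hd'; have Nd : d' != d.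
    by apply/eqP => E; subst; move: (notin_rm Hu); rewrite Hd'.
  have Hd'' : d' \in pre ++ d :: post by rewrite mem_rm.
  case: (HL d' Hd'') => L N'; split => //; exact: LF_agree (Ag _ Nd) L.
- apply: (other_thr (s:=s) (k0 := d) I) => //; last by right; right; right; rewrite Ex.
  by move=> b d' ->; left.
- by apply: (iOwn_gen I).
- move=> b d' H; have L := iDeps I H; apply: (LF_agree _ L); apply: Ag.
  by apply/eqP => E; subst; move: (ND b); rewrite H.
- exact: (iDepsU I).
- exact: (iDepsD I).
- apply: (iF2_gen I) => d' /= Hd'; left; rewrite Ex /=.
  by move: Hd'; rewrite !mem_cat in_cons => /orP [->|->] //; rewrite !orbT.
- apply: (iV_gen I) => //.
  + move=> j i' Hj; case: (j =P d) => [->|/eqP N]; first by rewrite Sd.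
    by case: (Ag j N) => -> _ _ -> _ Hs'; left.
  + by move=> j; left.
  + by rewrite Ex => j i' _ _ E _ H; left; move: H; rewrite /helper -E.
Qed.

Lemma case_Fin2_done s ts W t k i w ds : Inv s ts W -> TH ts t = Fin2 k i w ds [::] ->
  exists W', Inv s (set_nth (Loop None) ts t (if ds is [::] then Fin5 k i w else Fin3 k i w (seqmin ds))) W'.
Proof.
move=> I Ex; exists W; case: ds Ex => [|d ds] Ex; apply: Inv_local => //; rewrite ?Ex //=;
  by move=> *; left.
Qed.

Lemma case_Fin5 s ts W t k i w : Inv s ts W -> TH ts t = Fin5 k i w ->
  exists W', Inv s (set_nth (Loop None) ts t
    (if k < vidx s then (if w then Fin6 k i else Loop (Some (TVal k i))) else Fin8 k i)) W'.
Proof.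
move=> I Ex; exists W; case: ifP => Hv; [case: w Ex => Ex|]; apply: Inv_local => //; rewrite ?Ex //=.
- by move=> j i' _ _ [[-> _]|[/ltnW H _]]; left.
- by move=> j i' _ _ [[-> ->]|[_ //]]; left.
- move=> j i' _ _ [[E _]|[H _]]; right; right; first by subst; rewrite leqNgt Hv.
  by apply: leq_trans (ltnW H); rewrite leqNgt Hv.
Qed.

Lemma case_Fin6 s ts W t k i : Inv s ts W -> TH ts t = Fin6 k i ->
  exists W', Inv (set_vidx s (minn (vidx s) k)) (set_nth (Loop None) ts t (Fin7 k i)) W'.
Proof.
move=> I Ex; exists W; have I' : Inv (set_vidx s (minn (vidx s) k)) ts W.
  by apply: (Inv_irrel _ _ _ _ _ _ I) => //=; rewrite geq_minl.
apply: Inv_local => //; rewrite ?Ex //= => j i' _ _ H; right; right.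
by apply: leq_trans H; rewrite geq_minr.
Qed.

Lemma case_VD1 s ts W t k i : Inv s ts W -> TH ts t = VD1 k i ->
  exists W', Inv (set_vidx s (minn (vidx s) k.+1)) (set_nth (Loop None) ts t (VD2 k i)) W'.
Proof.
move=> I Ex; exists W; have I' : Inv (set_vidx s (minn (vidx s) k.+1)) ts W.
  by apply: (Inv_irrel _ _ _ _ _ _ I) => //=; rewrite geq_minl.
apply: Inv_local => //; rewrite ?Ex //= => j i' _ _ H; right; right.
by apply: leq_trans H; rewrite geq_minr.
Qed.

Lemma case_VLR s ts W t k i : Inv s ts W -> TH ts t = VLR k i ->
  exists W', Inv s (set_nth (Loop None) ts t (VChk k i (lrs s k))) W'.
Proof.
move=> I Ex; exists W; apply: Inv_local => //; rewrite ?Ex //=.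
by move=> j i' _ _ [<- ->]; left; split => //; split => // e ->; left.
Qed.

Lemma case_VChk s ts W t k i pre post p v : Inv s ts W -> TH ts t = VChk k i (pre ++ (p, v) :: post) ->
  exists W', Inv s (set_nth (Loop None) ts t
    (if entry_valid (data s) p k v then VChk k i (pre ++ post) else VAb k i)) W'.
Proof.
move=> I Ex; exists W; case: ifP => Hv; apply: Inv_local => //; rewrite ?Ex //=.
- move=> j i' _ _ [E [E' H]]; subst; left; split => //; split => // e /H.
  case: (e =P (p, v)) => [->|/eqP N]; first by right.
  by rewrite mem_rm.
- by move=> j i' _ _ [E [E' H]]; subst; left.
Qed.

Lemma case_VChk_done s ts W t k i : Inv s ts W -> TH ts t = VChk k i [::] ->
  exists W', Inv s (set_nth (Loop None) ts t (VFin k i)) W'.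
Proof.
move=> I Ex; exists W; apply: Inv_local => //; rewrite ?Ex //=.
by move=> j i' _ _ [E [E' H]]; subst; right; left => e /H [].
Qed.

Lemma case_VAb_fail s ts W t k i : Inv s ts W -> TH ts t = VAb k i ->
  ~~ (((stat s k).1 == i) && is_executed (stat s k).2) ->
  exists W', Inv s (set_nth (Loop None) ts t (VFin k i)) W'.
Proof.
move=> I Ex N; exists W; apply: Inv_local => //; rewrite ?Ex //=.
by move=> j i' _ Hs [E E']; subst; rewrite Hs eqxx in N.
Qed.

Lemma case_VConv s ts W t k i : Inv s ts W -> TH ts t = VConv k i ->
  exists W', Inv s (set_nth (Loop None) ts t (VEst k i (lwl s k))) W'.
Proof.
move=> I Ex; have HT := iThr I t; rewrite Ex in HT.
exists W; apply: Inv_local => //; rewrite ?Ex //=.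
- by case: HT => [? [? [? Hd]]]; do !split => //; move=> p H1 H2; rewrite H1 in H2.
- by move=> *; left.
Qed.

Lemma case_VEst_done s ts W t k i : Inv s ts W -> TH ts t = VEst k i [::] ->
  exists W', Inv s (set_nth (Loop None) ts t (VSR k i)) W'.
Proof.
move=> I Ex; have HT := iThr I t; rewrite Ex in HT.
exists W; apply: Inv_local => //; rewrite ?Ex //=.
- case: HT => [? [? [? [_ [H1 H2]]]]]; do !split => //; move=> p.
  by case: ifP => L; [apply: H2 | apply: H1; rewrite L].
- by move=> *; left.
Qed.

Lemma case_VAb_ok s ts W t k i : Inv s ts W -> TH ts t = VAb k i ->
  (stat s k).1 = i -> is_executed (stat s k).2 ->
  exists W', Inv (set_stat s (upd (stat s) k (i, ABORTING))) (set_nth (Loop None) ts t (VConv k i)) W'.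
Proof.
move=> I Ex E1 /stat_exec; rewrite E1 => Hs.
have [Hk [ws [Hw [Hl [Hd HP]]]]] := iExec I Hs.
set s' := set_stat _ _.
have Ag k' : k' != k -> agree s s' W W k'.
  by move=> N; apply: agree_stat; rewrite /upd (negbTE N).
have Sk : stat s' k = (i, ABORTING) by rewrite /= /upd eqxx.
exists W; apply: Inv_build.
- move=> k' i'; case: (k' =P k) => [->|/eqP N]; first by rewrite Sk.
  case: (Ag k' N) => -> _ _ _ _ /(iReady I) [? ?]; split => //; exact: clean_agree (Ag k' N) _.
- move=> k' i'; case: (k' =P k) => [->|/eqP N]; first by rewrite Sk.
  case: (Ag k' N) => -> _ _ _ _ /(iExec I) R; exact: recorded_agree (Ag k' N) R.
- by apply: (gGhost I Ag); rewrite Sk Hs.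
- exact: (iData I).
- exact: (iHigh I).
- exact: (iLwl I).
- rewrite /=; do !split => //; first by rewrite Hw.
  by move=> p Hp; rewrite Hd ws_get_notin // -Hl.
- apply: (other_thr (s:=s) (k0 := k) I) => //; last by right; right; left; exists i.
  by move=> b d ->; left.
- apply: (iOwn_gen I) => // k' /= /eqP <-; right; right; by exists i.
- move=> b d H; have L := iDeps I H; apply: (LF_agree _ L); apply: Ag.
  by apply/eqP => E; subst; case: L => i' [E' _]; rewrite Hs in E'.
- exact: (iDepsU I).
- exact: (iDepsD I).
- by apply: (iF2_gen I).
- apply: (iV_gen I) => //.
  + move=> j i' Hj; case: (j =P k) => [->|/eqP N]; first by rewrite Sk.
    by case: (Ag j N) => -> _ _ -> _ Hs'; left.
  + by move=> j; left.
  + rewrite Ex => j i' _ Hj E _ [E2 E3]; subst.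
    by move: E; rewrite Sk Hj.
Qed.

Lemma case_VEst s ts W t k i pre post p : Inv s ts W -> TH ts t = VEst k i (pre ++ p :: post) ->
  exists W', Inv (set_data s (upd_data (data s) p k EST))
     (set_nth (Loop None) ts t (VEst k i (pre ++ post))) W'.
Proof.
move=> I Ex; have HT := iThr I t; rewrite Ex in HT.
case: HT => [Hk [Hs [Hw [Hsub [H1 H2]]]]].
have Pl : p \in lwl s k by apply: Hsub; rewrite mem_cat in_cons eqxx orbT.
set s' := set_data _ _.
have Ag k' : k' != k -> agree s s' W W k'.
  by move=> N; split => //= p'; rewrite /upd_data (negbTE N) andbF.
have Own : owner k (TH ts t) by rewrite Ex /=.
exists W; apply: Inv_build.
- by apply: (gReady I Ag) => //; rewrite Hs.
- by apply: (gExec I Ag) => //; rewrite Hs.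
- exact: (gGhost I Ag).
- move=> p' k' i' v'; rewrite /= /upd_data; case: ifP => // _; exact: (iData I).
- by move=> p' k' H; rewrite /= /upd_data; case: ifP => [/andP [_ /eqP E]|_];
    [subst; rewrite leqNgt Hk in H| apply: (iHigh I)].
- exact: (iLwl I).
- rewrite /=; do !split => //.
  + by move=> q Hq; apply: Hsub; move: Hq; rewrite !mem_cat in_cons => /orP [->|->]; rewrite ?orbT.
  + move=> q Hq; rewrite /upd_data; case: (q =P p) => [E|_] /=; first by subst; rewrite Pl in Hq.
    exact: H1.
  + move=> q Hq Hq'; rewrite /upd_data; case: (q =P p) => [->|/eqP N] /=; first by rewrite eqxx.
    by apply: H2 => //; rewrite mem_rm.
- apply: (other_thr (s:=s) (k0 := k) I) => //; last by left.
  by move=> b d ->; left.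
- by apply: (iOwn_gen I) => // k' /= /eqP <-; left.
- by apply: (gDeps I Ag Own).
- exact: (iDepsU I).
- exact: (iDepsD I).
- by apply: (iF2_gen I).
- apply: (iV_gen I) => //.
  + move=> j i' Hj; case: (j =P k) => [->|/eqP N]; first by rewrite /= Hs.
    by case: (Ag j N) => -> _ _ -> _ Hs'; left.
  + move=> j; have [Hkj|Hjk] := ltnP k j; last by left=> e; rewrite valid_upd_high.
    by right.
  + by rewrite Ex => j i' _ _ _ _ H; left.
Qed.

Lemma case_VSR s ts W t k i : Inv s ts W -> TH ts t = VSR k i ->
  exists W', Inv (set_stat s (upd (stat s) k (i.+1, READY))) (set_nth (Loop None) ts t (VD1 k i)) W'.
Proof.
move=> I Ex; have HT := iThr I t; rewrite Ex in HT.
case: HT => [Hk [Hs [Hw Hc]]].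
set s' := set_stat _ _.
have Ag k' : k' != k -> agree s s' W W k'.
  by move=> N; apply: agree_stat; rewrite /upd (negbTE N).
have Sk : stat s' k = (i.+1, READY) by rewrite /= /upd eqxx.
have Own : owner k (TH ts t) by rewrite Ex /=.
exists W; apply: Inv_build.
- move=> k' i'; case: (k' =P k) => [->|/eqP N].
    rewrite Sk => -[<-]; split => //; apply: (iGhost I); by rewrite Hs.
  case: (Ag k' N) => -> _ _ _ _ /(iReady I) [? ?]; split => //; exact: clean_agree (Ag k' N) _.
- move=> k' i'; case: (k' =P k) => [->|/eqP N]; first by rewrite Sk.
  case: (Ag k' N) => -> _ _ _ _ /(iExec I) R; exact: recorded_agree (Ag k' N) R.
- move=> k' i'; case: (k' =P k) => [->|/eqP N].
    rewrite Sk => H; apply: (iGhost I); rewrite Hs; exact: ltnW.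
  by case: (Ag k' N) => -> _ _ _ _; apply: (iGhost I).
- exact: (iData I).
- exact: (iHigh I).
- exact: (iLwl I).
- by [].
- apply: (other_thr (s:=s) (k0 := k) I) => //; last by left.
  by move=> b d ->; left.
- by apply: (iOwn_gen I).
- by apply: (gDeps I Ag Own).
- exact: (iDepsU I).
- exact: (iDepsD I).
- by apply: (iF2_gen I).
- apply: (iV_gen I) => //.
  + move=> j i' Hj; case: (j =P k) => [->|/eqP N]; first by rewrite Sk.
    by case: (Ag j N) => -> _ _ -> _ Hs'; left.
  + by move=> j; left.
  + by rewrite Ex => j i' _ _ _ _ H; left.
Qed.

Lemma inv_step s ts W t s' x' : Inv s ts W -> tstep init txs s (TH ts t) s' x' ->
  exists W', Inv s' (set_nth (Loop None) ts t x') W'.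
Proof.
move=> I; move Ex: (TH ts t) => x H; destruct H.
all: try (loc W s; rewrite Ex //=; fail).
all: try (case: ifP => ?; loc W s; rewrite Ex //=; fail).
all: try (loc W s; rewrite Ex //=; by move=> *; left).
all: try (by eapply case_done; eassumption).
all: try (by eapply case_task; eassumption).
all: try (match goal with Ex : _ = NV_F |- _ => apply: case_NV_F I Ex end).
all: try (by eapply case_NV_C; eassumption).
all: try (by eapply case_TI_ok; eassumption).
all: try (by eapply case_Ex_wr; eassumption).
all: try (by eapply case_Ex_rdl; eassumption).
all: try (by eapply case_Ex_rdm; eassumption).
all: try (by eapply case_Ex_ret; eassumption).
all: try (by eapply case_ExDep_retry; eassumption).
all: try (by eapply case_ExDep_abort; eassumption).
all: try (by eapply case_RecW; eassumption).
all: try (by eapply case_RecW_done; eassumption).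
all: try (by eapply case_RecL; eassumption).
all: try (by eapply case_RecR; eassumption).
all: try (by eapply case_RecR_done; eassumption).
all: try (by eapply case_RecSL; eassumption).
all: try (by eapply case_RecSR; eassumption).
all: try (by eapply case_Fin0; eassumption).
all: try (by eapply case_Fin1; eassumption).
all: try (by eapply case_Fin2; eassumption).
all: try (by eapply case_Fin2_done; eassumption).
all: try (by eapply case_Fin5; eassumption).
all: try (by eapply case_Fin6; eassumption).
all: try (by eapply case_VD1; eassumption).
all: try (by eapply case_VLR; eassumption).
all: try (by eapply case_VChk; eassumption).
all: try (by eapply case_VChk_done; eassumption).
all: try (by eapply case_VAb_fail; eassumption).
all: try (by eapply case_VAb_ok; eassumption).
all: try (by eapply case_VConv; eassumption).
all: try (by eapply case_VEst; eassumption).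
all: try (by eapply case_VEst_done; eassumption).
all: try (by eapply case_VSR; eassumption).
Qed.

End Step.


Section Final.
Variables (Loc : eqType) (Val : Type) (init : Loc -> Val) (txs : seq (prog Loc Val)).
Local Notation n := (size txs).
Local Notation tx k := (nth Ret txs k).
Local Notation shared := (shared Loc Val).
Local Notation tstate := (tstate Loc Val).
Local Notation wset := (wset Loc Val).
Local Notation ghost := (ghost Loc Val).
Local Notation TH ts t := (nth (Loop None) ts t).
Local Notation Inv := (Inv init txs).
Local Notation sr := (sr init txs).

Lemma reach_inv m c : reachable init txs m c -> exists W, Inv c.1 c.2 W.
Proof.
elim=> [|c1 c2 _ [W I] St]; first by exists (fun _ _ => None); apply: Inv_init.
case: St I => s ts t s' x' _ H I /=; exact: inv_step I H.
Qed.

Ltac destr_x x := destruct x as [[[? ?|? ?]|]|[[? ?|? ?]|]| | | | | | | | | | | | | | | | | | | | | | | | | | | | | | | | | | | | | | | | | | | | |].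

Lemma helper_ongoing (s : shared) j x : helper s j x -> exists k, ongoing x = [:: k] /\ k <= j.
Proof.
destr_x x => //= H; eexists; split; try reflexivity; lia.
Qed.

Lemma foldr_minn_le (a : nat) l x : x \in l -> foldr minn a l <= x.
Proof.
elim: l => [|y l IH] //=; rewrite in_cons => /orP [/eqP ->|/IH H]; first exact: geq_minl.
exact: leq_trans (geq_minr _ _) H.
Qed.

Lemma foldr_minn_a (a : nat) l : foldr minn a l <= a.
Proof. by elim: l => [|y l IH] //=; apply: leq_trans (geq_minr _ _) IH. Qed.

Definition Q (s : shared) j := forall p,
  (mvread (data s) p j = RNotFound /\ (sr j).1 p = init p /\ p \notin (sr j).2) \/
  (exists k i, mvread (data s) p j = ROk k i ((sr j).1 p) /\ p \in (sr j).2).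

Lemma Q_all s ts W : Inv s ts W -> (forall j, j < n -> exists i, stat s j = (i, EXECUTED) /\ good s j) ->
  forall j, j <= n -> Q s j.
Proof.
move=> I H; elim=> [_|j IH Hj] p.
  by left; rewrite /sr take0.
have Hjn : j < n by [].
have {IH} IH := IH (ltnW Hj).
case: (H j Hjn) => i [Hs G].
case: (iExec I Hs) => _ [ws [Hw [Hl [Hd HP]]]].
have Hv : forall e, e \in lrs s j -> valof init W e.1 e.2 = Some ((sr j).1 e.1).
  move=> [q ver] /G /=; rewrite /entry_valid; case: (IH q) => [[-> [E _]]|[k [i' [M _]]]].
    by move/eqP => ->; rewrite /= E.
  rewrite M => /eqP ->; exact: (iData I) (mvread_ROk M).
have R := Pre_run HP Hv; rewrite /= in R.
rewrite (sr_S _ Hjn) R /= Hd.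
case Gp: (ws_get ws p) => [v|] /=.
  right; exists j, i; split; first by rewrite /apply_ws Gp.
  by rewrite mem_cat (ws_get_some Gp) orbT.
rewrite /apply_ws Gp /= mem_cat.
have Np : p \notin map fst ws by rewrite -ws_get_in Gp.
rewrite (negbTE Np) orbF; exact: IH.
Qed.

Lemma final_main m c : reachable init txs m c ->
  (forall k, k < size txs -> k < gci txs c) ->
  (forall p : Loc, (exists j, isSome (data c.1 p j)) <-> p \in seq_written init txs) /\
  (forall p : Loc, p \in seq_written init txs ->
     exists j i, mvread (data c.1) p (size txs) = ROk j i (seq_final init txs p)).
Proof.
move=> /reach_inv [W]; case: c => s ts /= I Hg.
have Gv : forall k, k < n -> k < vidx s.
  by move=> k /Hg H; apply: leq_trans H (foldr_minn_a _ _).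
have Gex : forall j, j < n -> is_executed (stat s j).2.
  move=> j Hj; apply/negPn/negP => N; have := Hg j Hj; rewrite /gci /=.
  rewrite ltnNge (foldr_minn_le _) //.
  by rewrite mem_cat mem_filter N mem_iota /= add0n Hj orbT.
have Gon : forall t k, k \in ongoing (TH ts t) -> n <= k.
  move=> t k Hk; rewrite leqNgt; apply/negP => Hkn; have := Hg k Hkn; rewrite /gci /=.
  rewrite ltnNge (foldr_minn_le _) //; rewrite mem_cat; apply/orP; left.
  case: (ltnP t (size ts)) => Ht; last by move: Hk; rewrite nth_default.
  apply/flattenP; exists (ongoing (TH ts t)) => //.
  rewrite -(nth_map (Loop None) [::]) //; apply: mem_nth; rewrite size_map //.
have Good : forall j, j < n -> exists i, stat s j = (i, EXECUTED) /\ good s j.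
  move=> j Hj; have /stat_exec E := Gex j Hj; exists (stat s j).1; split => //.
  case: (iV I Hj E) => [//|[H|[t H]]].
    by have := Gv j Hj; rewrite ltnNge H.
  case: (helper_ongoing H) => k [Ho Hk].
  have := Gon t k; rewrite Ho inE eqxx => /(_ isT) Hnk.
  by have := leq_ltn_trans Hk Hj; rewrite ltnNge Hnk.
have QN := Q_all I Good (leqnn n).
have Sn : sr n = seq_run init txs [::] by rewrite /sr take_size.
split.
- move=> p; split.
  + move=> [j Hj]; case: (ltnP j n) => Hjn; last by rewrite (iHigh I p Hjn) in Hj.
    case: (QN p) => [[M _]|[k [i [_ Hw]]]]; last by rewrite /seq_written -Sn.
    by rewrite (mvread_NF M Hjn) in Hj.
  + rewrite /seq_written -Sn => Hp; case: (QN p) => [[_ [_ N]]|[k [i [M _]]]].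
      by rewrite Hp in N.
    by exists k; rewrite (mvread_ROk M).
- move=> p; rewrite /seq_written /seq_final -Sn => Hp.
  case: (QN p) => [[_ [_ N]]|[k [i [M _]]]]; first by rewrite Hp in N.
  by exists k, i.
Qed.

End Final.


Unset Implicit Arguments.

Theorem mainTheorem1 (Loc : eqType) (Val : Type) (init : Loc -> Val)
    (txs : seq (prog Loc Val)) (m : nat) (c : config Loc Val) :
  reachable init txs m c ->
  (forall k, k < size txs -> k < gci txs c) ->
  (forall p : Loc, (exists j, isSome (data c.1 p j)) <-> p \in seq_written init txs) /\
  (forall p : Loc, p \in seq_written init txs ->
     exists j i, mvread (data c.1) p (size txs) = ROk j i (seq_final init txs p)).
Proof.
exact: final_main.
Qed.
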